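(* Let $\lambda\in\mathbb Q\cup\{\infty\}$, $i\in\{1,2,3,6\}$ and $\ell\in\mathbb Z_{>0}$. Then: (a) if $d\in R^\lambda_\ell(i)$ then $R^\lambda_\ell(i)=\{\Phi^j(d)\mid j=1,\ldots,i\}$; (b) if $i>1$ and $i\mid\ell$ then $R^\lambda_\ell(i)=\emptyset$; (c) if $i>1$ and $i\nmid\ell$ then $R^\lambda_\ell(i)$ consists of exactly $i$ real roots; (d) $R^\lambda_\ell(1)=\{h_{a,b}\}$, where $a\in\mathbb N$, $b\in\mathbb Z$ satisfy $b/a=\lambda$ and $\gcd(a,b)=\ell$ (for $\lambda=\infty$: $a=0$, $b=\ell$).
   Context: Let $V=\{1_1,1_2,2_1,2_2,3_0,3_1,4_0,4_1,5_{-1},5_0\}$ and identify $\mathbb Z^{10}=\mathbb Z^V$. Let $A$ be the set of 12 arrows $2_2\to1_2$, $1_2\to2_1$, $3_1\to2_1$, $2_2\to3_1$, $4_1\to3_1$, $3_1\to4_0$, $5_0\to4_0$, $4_1\to5_0$, $2_1\to1_1$, $2_1\to3_0$, $4_0\to3_0$, $4_0\to5_{-1}$, and let $P=\{(2_2,2_1),(4_1,4_0),(1_2,1_1),(3_1,3_0),(5_0,5_{-1})\}$. The Ringel form (of the tubular algebra $\Delta$ of type $(6,3,2)$) is $\langle d,e\rangle=\sum_{v\in V}d_ve_v-\sum_{(v\to w)\in A}d_ve_w+\sum_{(v,w)\in P}d_ve_w$. Write $\langle d,e\rangle=d^{t}Ee$ and let $\Phi=-E^{-1}E^{t}$ (Coxeter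 matrix; $\Phi$ is integral with $\Phi^6=\mathrm{id}$). Let $q(d)=\langle d,d\rangle$ and $R=\{d\in\mathbb Z^{10}\setminus\{0\}: q(d)\in\{0,1\}\}$; $d\in R$ is real if $q(d)=1$, imaginary if $q(d)=0$. Let $h_0$ have entries $h_0(1_1,1_2,2_1,2_2,3_0,3_1,4_0,4_1,5_{-1},5_0)=(1,1,3,0,2,2,3,0,1,1)$ and $h_\infty$ entries $(0,1,1,1,0,2,1,1,0,1)$ in the same order; put $h_{a,b}=ah_0+bh_\infty$. $R^+=\{d\in R: \langle d,h_\infty\rangle>0\text{ or }(\langle d,h_\infty\rangle=0\text{ and }\langle h_0,d\rangle>0)\}$. For $d\in R^+$ its slope is $\langle h_0,d\rangle/\langle d,h_\infty\rangle\in\mathbb Q\cup\{\infty\}$ and $R^\lambda$ is the set of positive roots of slope $\lambda$. The rank $\operatorname{rk}(d)$ is the least $m\ge1$ with $\Phi^m(d)=d$; $h(d)=\sum_{j=1}^{\operatorname{rk}(d)}\Phi^j(d)$; the quasi-length $\operatorname{ql}(d)$ is the gcd of the entries of $h(d)$. $R^\lambda_\ell(i)=\{d\in R^\lambda:\operatorname{rk}(d)=i,\ \operatorname{ql}(d)=\ell\}$. *)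

(* Defs.v *)
From HB Require Import structures.
From mathcomp Require Import all_boot all_order all_algebra.
Set Implicit Arguments. Unset Strict Implicit. Unset Printing Implicit Defensive.
Import Order.TTheory GRing.Theory Num.Theory.
Local Open Scope ring_scope.

(* Vertex order (indices 0..9):
   1_1,1_2,2_1,2_2,3_0,3_1,4_0,4_1,5_{-1},5_0 *)

Definition arrows : seq (nat * nat) :=
  [:: (3,1); (1,2); (5,2); (3,5); (7,5); (5,6); (9,6); (7,9);
      (2,0); (2,4); (6,4); (6,8)]%N.

Definition Ppairs : seq (nat * nat) :=
  [:: (3,2); (7,6); (1,0); (5,4); (9,8)]%N.

Definition Eentry (i j : nat) : int :=
  (i == j)%:Z - (count (pred1 (i, j)) arrows)%:Z + (count (pred1 (i, j)) Ppairs)%:Z.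

(* Ringel form matrix: <d,e> = d^t E e *)
Definition Emx : 'M[int]_10 := \matrix_(i < 10, j < 10) Eentry i j.

Definition EmxQ : 'M[rat]_10 := map_mx (fun z : int => z%:~R) Emx.

(* Coxeter matrix Phi = - E^{-1} E^t, computed over Q; it is integral, so
   we read off its (integer) numerators. *)
Definition PhiQ : 'M[rat]_10 := - (invmx EmxQ *m EmxQ^T).
Definition Phi : 'M[int]_10 := map_mx (fun q : rat => numq q) PhiQ.

Notation vec := 'cV[int]_10.

Definition form (d e : vec) : int := (d^T *m Emx *m e) 0 0.
Definition qform (d : vec) : int := form d d.

Definition vec_of (s : seq int) : vec := \col_(i < 10) nth 0 s i.
Definition h_zero : vec := vec_of [:: 1; 1; 3; 0; 2; 2; 3; 0; 1; 1].
Definition h_infty : vec := vec_of [:: 0; 1; 1; 1; 0; 2; 1; 1; 0; 1].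
Definition hab (a : nat) (b : int) : vec := a%:Z *: h_zero + b *: h_infty.

Definition isRoot (d : vec) : bool := (d != 0) && ((qform d == 0) || (qform d == 1)).
Definition isReal (d : vec) : bool := isRoot d && (qform d == 1).

Definition isPosRoot (d : vec) : bool :=
  isRoot d && ((0 < form d h_infty) || ((form d h_infty == 0) && (0 < form h_zero d))).

(* slope in Q \cup {oo}; None stands for oo *)
Definition slope (d : vec) : option rat :=
  if form d h_infty == 0 then None
  else Some ((form h_zero d)%:~R / (form d h_infty)%:~R).

Definition PhiPow (j : nat) (d : vec) : vec := (Phi ^+ j) *m d.

Definition isRank (d : vec) (m : nat) : bool :=
  [&& (0 < m)%N, PhiPow m d == d &
      [forall k : 'I_m, (0 < k)%N ==> (PhiPow k d != d)]].

Definition hvec (d : vec) (m : nat) : vec := \sum_(1 <= j < m.+1) PhiPow j d.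

Definition qlen (d : vec) (m : nat) : int := \big[gcdz/0]_(k < 10) hvec d m k 0.

Definition inR (lam : option rat) (l i : nat) (d : vec) : Prop :=
  isPosRoot d /\ slope d = lam /\ isRank d i /\ qlen d i = l%:Z.

(* Main.v *)
From Stdlib Require Import ZArith Lia.
Require Import Defs.
From HB Require Import structures.
From mathcomp Require Import all_boot all_order all_algebra.
From mathcomp Require Import zify ring lra ssrZ.
Import Order.TTheory GRing.Theory Num.Theory.
Local Open Scope ring_scope.
Definition Plist : seq (seq int) := [:: [:: -1; -1; 1; 0; 0; 0; 0; 0; 0; 0];
  [:: 0; 0; 0; 0; -1; 0; 1; 0; 0; 0];
  [:: -1; 0; 1; -1; -1; 0; 1; 0; 0; 0];
  [:: 0; 0; 0; 0; -1; 0; 1; 0; -1; 0];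
  [:: 0; 0; 1; 0; -1; -1; 1; 0; 0; 0];
  [:: -1; 0; 1; 0; -1; 0; 1; 0; -1; 0];
  [:: 0; 0; 1; 0; -1; 0; 1; -1; -1; 0];
  [:: -1; 0; 1; 0; -1; 0; 0; 0; 0; 0];
  [:: 0; 0; 0; 0; 0; 0; 1; 0; -1; -1];
  [:: 0; 0; 1; 0; -1; 0; 0; 0; 0; 0]].
Definition Elist : seq (seq int) := [:: [:: 1; 0; 0; 0; 0; 0; 0; 0; 0; 0];
  [:: 1; 1; -1; 0; 0; 0; 0; 0; 0; 0];
  [:: -1; 0; 1; 0; -1; 0; 0; 0; 0; 0];
  [:: 0; -1; 1; 1; 0; -1; 0; 0; 0; 0];
  [:: 0; 0; 0; 0; 1; 0; 0; 0; 0; 0];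
  [:: 0; 0; -1; 0; 1; 1; -1; 0; 0; 0];
  [:: 0; 0; 0; 0; -1; 0; 1; 0; -1; 0];
  [:: 0; 0; 0; 0; 0; -1; 1; 1; 0; -1];
  [:: 0; 0; 0; 0; 0; 0; 0; 0; 1; 0];
  [:: 0; 0; 0; 0; 0; 0; -1; 0; 1; 1]].
Definition ETlist : seq (seq int) := [:: [:: 1; 1; -1; 0; 0; 0; 0; 0; 0; 0];
  [:: 0; 1; 0; -1; 0; 0; 0; 0; 0; 0];
  [:: 0; -1; 1; 1; 0; -1; 0; 0; 0; 0];
  [:: 0; 0; 0; 1; 0; 0; 0; 0; 0; 0];
  [:: 0; 0; -1; 0; 1; 1; -1; 0; 0; 0];
  [:: 0; 0; 0; -1; 0; 1; 0; -1; 0; 0];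
  [:: 0; 0; 0; 0; 0; -1; 1; 1; 0; -1];
  [:: 0; 0; 0; 0; 0; 0; 0; 1; 0; 0];
  [:: 0; 0; 0; 0; 0; 0; -1; 0; 1; 1];
  [:: 0; 0; 0; 0; 0; 0; 0; -1; 0; 1]].
Definition Flist : seq (seq int) := [:: [:: 1; 0; 0; 0; 0; 0; 0; 0; 0; 0];
  [:: 0; 1; 1; 0; 1; 0; 0; 0; 0; 0];
  [:: 1; 0; 1; 0; 1; 0; 0; 0; 0; 0];
  [:: 0; 1; 1; 1; 1; 1; 1; 0; 1; 0];
  [:: 0; 0; 0; 0; 1; 0; 0; 0; 0; 0];
  [:: 1; 0; 1; 0; 1; 1; 1; 0; 1; 0];
  [:: 0; 0; 0; 0; 1; 0; 1; 0; 1; 0];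
  [:: 1; 0; 1; 0; 1; 1; 1; 1; 0; 1];
  [:: 0; 0; 0; 0; 0; 0; 0; 0; 1; 0];
  [:: 0; 0; 0; 0; 1; 0; 1; 0; 0; 1]].
Definition S0 : seq (seq int) := [:: [:: 0; 0; 0; 0; 0; 0; 0; 0; 0; 0];
  [:: 0; -2; -3; 0; -2; -2; -3; 0; -1; -1];
  [:: 0; -1; -3; 0; -2; -2; -3; 0; -1; -1];
  [:: 0; -1; -2; 0; -2; -2; -3; 0; -1; -1];
  [:: 0; -1; -2; 0; -2; -1; -3; 0; -1; -1];
  [:: 0; -1; -2; 0; -2; -1; -3; 1; -2; 0];
  [:: 0; -1; -2; 0; -2; -1; -3; 1; -1; -1];
  [:: 0; -1; -2; 0; -2; -1; -3; 1; -1; 0];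
  [:: 0; -1; -2; 0; -2; -1; -2; 0; -1; -1];
  [:: 0; -1; -2; 0; -2; -1; -2; 0; -1; 0];
  [:: 0; -1; -2; 0; -2; -1; -2; 0; 0; -1];
  [:: 0; -1; -2; 0; -2; -1; -2; 1; -1; 0];
  [:: 0; -1; -2; 0; -2; 0; -2; 1; -1; 0];
  [:: 0; -1; -2; 0; -1; -2; -3; 0; -1; -1];
  [:: 0; -1; -2; 0; -1; -2; -2; -1; -1; -1];
  [:: 0; -1; -2; 0; -1; -2; -2; -1; 0; -2];
  [:: 0; -1; -2; 0; -1; -2; -2; -1; 0; -1];
  [:: 0; -1; -2; 0; -1; -2; -2; 0; -1; -1];
  [:: 0; -1; -2; 0; -1; -2; -2; 0; -1; 0];
  [:: 0; -1; -2; 0; -1; -2; -2; 0; 0; -1];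
  [:: 0; -1; -2; 0; -1; -2; -1; -1; 0; -1];
  [:: 0; -1; -2; 0; -1; -1; -2; 0; -1; -1];
  [:: 0; -1; -2; 0; -1; -1; -2; 0; -1; 0];
  [:: 0; -1; -2; 0; -1; -1; -2; 0; 0; -1];
  [:: 0; -1; -2; 0; -1; -1; -2; 1; -1; 0];
  [:: 0; -1; -2; 0; -1; -1; -1; -1; 0; -1];
  [:: 0; -1; -2; 0; -1; -1; -1; 0; -1; 0];
  [:: 0; -1; -2; 0; -1; -1; -1; 0; 0; -1];
  [:: 0; -1; -2; 0; -1; -1; -1; 0; 0; 0];
  [:: 0; -1; -2; 0; 0; -2; -1; -1; 0; -1];
  [:: 0; -1; -1; 0; -2; 0; -2; 1; -1; 0];
  [:: 0; -1; -1; 0; -1; -1; -2; 0; -1; -1];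
  [:: 0; -1; -1; 0; -1; -1; -2; 0; -1; 0];
  [:: 0; -1; -1; 0; -1; -1; -2; 0; 0; -1];
  [:: 0; -1; -1; 0; -1; -1; -2; 1; -1; 0];
  [:: 0; -1; -1; 0; -1; -1; -1; -1; 0; -1];
  [:: 0; -1; -1; 0; -1; -1; -1; 0; -1; 0];
  [:: 0; -1; -1; 0; -1; -1; -1; 0; 0; -1];
  [:: 0; -1; -1; 0; -1; -1; -1; 0; 0; 0];
  [:: 0; -1; -1; 0; -1; 0; -2; 1; -1; 0];
  [:: 0; -1; -1; 0; -1; 0; -1; 0; -1; 0];
  [:: 0; -1; -1; 0; -1; 0; -1; 0; 0; -1];
  [:: 0; -1; -1; 0; -1; 0; -1; 0; 0; 0];
  [:: 0; -1; -1; 0; -1; 0; -1; 1; -1; 0];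
  [:: 0; -1; -1; 0; -1; 0; -1; 1; -1; 1];
  [:: 0; -1; -1; 0; -1; 0; -1; 1; 0; 0];
  [:: 0; -1; -1; 0; -1; 0; 0; 0; 0; 0];
  [:: 0; -1; -1; 0; 0; -2; -1; -1; 0; -1];
  [:: 0; -1; -1; 0; 0; -1; -1; -1; 0; -1];
  [:: 0; -1; -1; 0; 0; -1; -1; 0; -1; 0];
  [:: 0; -1; -1; 0; 0; -1; -1; 0; 0; -1];
  [:: 0; -1; -1; 0; 0; -1; -1; 0; 0; 0];
  [:: 0; -1; -1; 0; 0; -1; 0; -1; 0; -1];
  [:: 0; -1; -1; 0; 0; -1; 0; -1; 0; 0];
  [:: 0; -1; -1; 0; 0; -1; 0; -1; 1; -1];
  [:: 0; -1; -1; 0; 0; -1; 0; 0; 0; 0];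
  [:: 0; -1; -1; 0; 0; 0; 0; 0; 0; 0];
  [:: 0; -1; 0; 0; 0; 0; 0; 0; 0; 0];
  [:: 0; 0; -1; 0; -2; 0; -2; 1; -1; 0];
  [:: 0; 0; -1; 0; -1; -1; -2; 0; -1; -1];
  [:: 0; 0; -1; 0; -1; -1; -2; 0; -1; 0];
  [:: 0; 0; -1; 0; -1; -1; -2; 0; 0; -1];
  [:: 0; 0; -1; 0; -1; -1; -2; 1; -1; 0];
  [:: 0; 0; -1; 0; -1; -1; -1; -1; 0; -1];
  [:: 0; 0; -1; 0; -1; -1; -1; 0; -1; 0];
  [:: 0; 0; -1; 0; -1; -1; -1; 0; 0; -1];
  [:: 0; 0; -1; 0; -1; -1; -1; 0; 0; 0];
  [:: 0; 0; -1; 0; -1; 0; -2; 1; -1; 0];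
  [:: 0; 0; -1; 0; -1; 0; -1; 0; -1; 0];
  [:: 0; 0; -1; 0; -1; 0; -1; 0; 0; -1];
  [:: 0; 0; -1; 0; -1; 0; -1; 0; 0; 0];
  [:: 0; 0; -1; 0; -1; 0; -1; 1; -1; 0];
  [:: 0; 0; -1; 0; -1; 0; -1; 1; -1; 1];
  [:: 0; 0; -1; 0; -1; 0; -1; 1; 0; 0];
  [:: 0; 0; -1; 0; -1; 0; 0; 0; 0; 0];
  [:: 0; 0; -1; 0; 0; -2; -1; -1; 0; -1];
  [:: 0; 0; -1; 0; 0; -1; -1; -1; 0; -1];
  [:: 0; 0; -1; 0; 0; -1; -1; 0; -1; 0];
  [:: 0; 0; -1; 0; 0; -1; -1; 0; 0; -1];
  [:: 0; 0; -1; 0; 0; -1; -1; 0; 0; 0];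
  [:: 0; 0; -1; 0; 0; -1; 0; -1; 0; -1];
  [:: 0; 0; -1; 0; 0; -1; 0; -1; 0; 0];
  [:: 0; 0; -1; 0; 0; -1; 0; -1; 1; -1];
  [:: 0; 0; -1; 0; 0; -1; 0; 0; 0; 0];
  [:: 0; 0; -1; 0; 0; 0; 0; 0; 0; 0];
  [:: 0; 0; 0; 0; -1; 0; -2; 1; -1; 0];
  [:: 0; 0; 0; 0; -1; 0; -1; 0; -1; 0];
  [:: 0; 0; 0; 0; -1; 0; -1; 0; 0; -1];
  [:: 0; 0; 0; 0; -1; 0; -1; 0; 0; 0];
  [:: 0; 0; 0; 0; -1; 0; -1; 1; -1; 0];
  [:: 0; 0; 0; 0; -1; 0; -1; 1; -1; 1];
  [:: 0; 0; 0; 0; -1; 0; -1; 1; 0; 0];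
  [:: 0; 0; 0; 0; -1; 0; 0; 0; 0; 0];
  [:: 0; 0; 0; 0; -1; 1; -1; 1; -1; 0];
  [:: 0; 0; 0; 0; -1; 1; -1; 1; -1; 1];
  [:: 0; 0; 0; 0; -1; 1; -1; 1; 0; 0];
  [:: 0; 0; 0; 0; -1; 1; -1; 2; -1; 1];
  [:: 0; 0; 0; 0; -1; 1; 0; 0; 0; 0];
  [:: 0; 0; 0; 0; -1; 1; 0; 1; -1; 1];
  [:: 0; 0; 0; 0; -1; 1; 0; 1; 0; 0];
  [:: 0; 0; 0; 0; -1; 1; 0; 1; 0; 1];
  [:: 0; 0; 0; 0; 0; -1; -1; -1; 0; -1];
  [:: 0; 0; 0; 0; 0; -1; -1; 0; -1; 0];
  [:: 0; 0; 0; 0; 0; -1; -1; 0; 0; -1];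
  [:: 0; 0; 0; 0; 0; -1; -1; 0; 0; 0];
  [:: 0; 0; 0; 0; 0; -1; 0; -1; 0; -1];
  [:: 0; 0; 0; 0; 0; -1; 0; -1; 0; 0];
  [:: 0; 0; 0; 0; 0; -1; 0; -1; 1; -1];
  [:: 0; 0; 0; 0; 0; -1; 0; 0; 0; 0];
  [:: 0; 0; 0; 0; 0; 0; -1; 0; -1; 0];
  [:: 0; 0; 0; 0; 0; 0; -1; 0; 0; -1];
  [:: 0; 0; 0; 0; 0; 0; -1; 0; 0; 0];
  [:: 0; 0; 0; 0; 0; 0; -1; 1; -1; 0];
  [:: 0; 0; 0; 0; 0; 0; -1; 1; -1; 1];
  [:: 0; 0; 0; 0; 0; 0; -1; 1; 0; 0];
  [:: 0; 0; 0; 0; 0; 0; 0; -1; 0; -1];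
  [:: 0; 0; 0; 0; 0; 0; 0; -1; 0; 0];
  [:: 0; 0; 0; 0; 0; 0; 0; -1; 1; -1];
  [:: 0; 0; 0; 0; 0; 0; 0; 0; -1; 0];
  [:: 0; 0; 0; 0; 0; 0; 0; 0; -1; 1];
  [:: 0; 0; 0; 0; 0; 0; 0; 0; 0; -1];
  [:: 0; 0; 0; 0; 0; 0; 0; 0; 0; 1];
  [:: 0; 0; 0; 0; 0; 0; 0; 0; 1; -1];
  [:: 0; 0; 0; 0; 0; 0; 0; 0; 1; 0];
  [:: 0; 0; 0; 0; 0; 0; 0; 1; -1; 1];
  [:: 0; 0; 0; 0; 0; 0; 0; 1; 0; 0];
  [:: 0; 0; 0; 0; 0; 0; 0; 1; 0; 1];
  [:: 0; 0; 0; 0; 0; 0; 1; -1; 0; 0];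
  [:: 0; 0; 0; 0; 0; 0; 1; -1; 1; -1];
  [:: 0; 0; 0; 0; 0; 0; 1; -1; 1; 0];
  [:: 0; 0; 0; 0; 0; 0; 1; 0; 0; 0];
  [:: 0; 0; 0; 0; 0; 0; 1; 0; 0; 1];
  [:: 0; 0; 0; 0; 0; 0; 1; 0; 1; 0];
  [:: 0; 0; 0; 0; 0; 1; 0; 0; 0; 0];
  [:: 0; 0; 0; 0; 0; 1; 0; 1; -1; 1];
  [:: 0; 0; 0; 0; 0; 1; 0; 1; 0; 0];
  [:: 0; 0; 0; 0; 0; 1; 0; 1; 0; 1];
  [:: 0; 0; 0; 0; 0; 1; 1; 0; 0; 0];
  [:: 0; 0; 0; 0; 0; 1; 1; 0; 0; 1];
  [:: 0; 0; 0; 0; 0; 1; 1; 0; 1; 0];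
  [:: 0; 0; 0; 0; 0; 1; 1; 1; 0; 1];
  [:: 0; 0; 0; 0; 1; -1; 0; -1; 0; -1];
  [:: 0; 0; 0; 0; 1; -1; 0; -1; 0; 0];
  [:: 0; 0; 0; 0; 1; -1; 0; -1; 1; -1];
  [:: 0; 0; 0; 0; 1; -1; 0; 0; 0; 0];
  [:: 0; 0; 0; 0; 1; -1; 1; -2; 1; -1];
  [:: 0; 0; 0; 0; 1; -1; 1; -1; 0; 0];
  [:: 0; 0; 0; 0; 1; -1; 1; -1; 1; -1];
  [:: 0; 0; 0; 0; 1; -1; 1; -1; 1; 0];
  [:: 0; 0; 0; 0; 1; 0; 0; 0; 0; 0];
  [:: 0; 0; 0; 0; 1; 0; 1; -1; 0; 0];
  [:: 0; 0; 0; 0; 1; 0; 1; -1; 1; -1];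
  [:: 0; 0; 0; 0; 1; 0; 1; -1; 1; 0];
  [:: 0; 0; 0; 0; 1; 0; 1; 0; 0; 0];
  [:: 0; 0; 0; 0; 1; 0; 1; 0; 0; 1];
  [:: 0; 0; 0; 0; 1; 0; 1; 0; 1; 0];
  [:: 0; 0; 0; 0; 1; 0; 2; -1; 1; 0];
  [:: 0; 0; 1; 0; 0; 0; 0; 0; 0; 0];
  [:: 0; 0; 1; 0; 0; 1; 0; 0; 0; 0];
  [:: 0; 0; 1; 0; 0; 1; 0; 1; -1; 1];
  [:: 0; 0; 1; 0; 0; 1; 0; 1; 0; 0];
  [:: 0; 0; 1; 0; 0; 1; 0; 1; 0; 1];
  [:: 0; 0; 1; 0; 0; 1; 1; 0; 0; 0];
  [:: 0; 0; 1; 0; 0; 1; 1; 0; 0; 1];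
  [:: 0; 0; 1; 0; 0; 1; 1; 0; 1; 0];
  [:: 0; 0; 1; 0; 0; 1; 1; 1; 0; 1];
  [:: 0; 0; 1; 0; 0; 2; 1; 1; 0; 1];
  [:: 0; 0; 1; 0; 1; 0; 0; 0; 0; 0];
  [:: 0; 0; 1; 0; 1; 0; 1; -1; 0; 0];
  [:: 0; 0; 1; 0; 1; 0; 1; -1; 1; -1];
  [:: 0; 0; 1; 0; 1; 0; 1; -1; 1; 0];
  [:: 0; 0; 1; 0; 1; 0; 1; 0; 0; 0];
  [:: 0; 0; 1; 0; 1; 0; 1; 0; 0; 1];
  [:: 0; 0; 1; 0; 1; 0; 1; 0; 1; 0];
  [:: 0; 0; 1; 0; 1; 0; 2; -1; 1; 0];
  [:: 0; 0; 1; 0; 1; 1; 1; 0; 0; 0];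
  [:: 0; 0; 1; 0; 1; 1; 1; 0; 0; 1];
  [:: 0; 0; 1; 0; 1; 1; 1; 0; 1; 0];
  [:: 0; 0; 1; 0; 1; 1; 1; 1; 0; 1];
  [:: 0; 0; 1; 0; 1; 1; 2; -1; 1; 0];
  [:: 0; 0; 1; 0; 1; 1; 2; 0; 0; 1];
  [:: 0; 0; 1; 0; 1; 1; 2; 0; 1; 0];
  [:: 0; 0; 1; 0; 1; 1; 2; 0; 1; 1];
  [:: 0; 0; 1; 0; 2; 0; 2; -1; 1; 0];
  [:: 0; 1; 0; 0; 0; 0; 0; 0; 0; 0];
  [:: 0; 1; 1; 0; 0; 0; 0; 0; 0; 0];
  [:: 0; 1; 1; 0; 0; 1; 0; 0; 0; 0];
  [:: 0; 1; 1; 0; 0; 1; 0; 1; -1; 1];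
  [:: 0; 1; 1; 0; 0; 1; 0; 1; 0; 0];
  [:: 0; 1; 1; 0; 0; 1; 0; 1; 0; 1];
  [:: 0; 1; 1; 0; 0; 1; 1; 0; 0; 0];
  [:: 0; 1; 1; 0; 0; 1; 1; 0; 0; 1];
  [:: 0; 1; 1; 0; 0; 1; 1; 0; 1; 0];
  [:: 0; 1; 1; 0; 0; 1; 1; 1; 0; 1];
  [:: 0; 1; 1; 0; 0; 2; 1; 1; 0; 1];
  [:: 0; 1; 1; 0; 1; 0; 0; 0; 0; 0];
  [:: 0; 1; 1; 0; 1; 0; 1; -1; 0; 0];
  [:: 0; 1; 1; 0; 1; 0; 1; -1; 1; -1];
  [:: 0; 1; 1; 0; 1; 0; 1; -1; 1; 0];
  [:: 0; 1; 1; 0; 1; 0; 1; 0; 0; 0];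
  [:: 0; 1; 1; 0; 1; 0; 1; 0; 0; 1];
  [:: 0; 1; 1; 0; 1; 0; 1; 0; 1; 0];
  [:: 0; 1; 1; 0; 1; 0; 2; -1; 1; 0];
  [:: 0; 1; 1; 0; 1; 1; 1; 0; 0; 0];
  [:: 0; 1; 1; 0; 1; 1; 1; 0; 0; 1];
  [:: 0; 1; 1; 0; 1; 1; 1; 0; 1; 0];
  [:: 0; 1; 1; 0; 1; 1; 1; 1; 0; 1];
  [:: 0; 1; 1; 0; 1; 1; 2; -1; 1; 0];
  [:: 0; 1; 1; 0; 1; 1; 2; 0; 0; 1];
  [:: 0; 1; 1; 0; 1; 1; 2; 0; 1; 0];
  [:: 0; 1; 1; 0; 1; 1; 2; 0; 1; 1];
  [:: 0; 1; 1; 0; 2; 0; 2; -1; 1; 0];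
  [:: 0; 1; 2; 0; 0; 2; 1; 1; 0; 1];
  [:: 0; 1; 2; 0; 1; 1; 1; 0; 0; 0];
  [:: 0; 1; 2; 0; 1; 1; 1; 0; 0; 1];
  [:: 0; 1; 2; 0; 1; 1; 1; 0; 1; 0];
  [:: 0; 1; 2; 0; 1; 1; 1; 1; 0; 1];
  [:: 0; 1; 2; 0; 1; 1; 2; -1; 1; 0];
  [:: 0; 1; 2; 0; 1; 1; 2; 0; 0; 1];
  [:: 0; 1; 2; 0; 1; 1; 2; 0; 1; 0];
  [:: 0; 1; 2; 0; 1; 1; 2; 0; 1; 1];
  [:: 0; 1; 2; 0; 1; 2; 1; 1; 0; 1];
  [:: 0; 1; 2; 0; 1; 2; 2; 0; 0; 1];
  [:: 0; 1; 2; 0; 1; 2; 2; 0; 1; 0];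
  [:: 0; 1; 2; 0; 1; 2; 2; 0; 1; 1];
  [:: 0; 1; 2; 0; 1; 2; 2; 1; 0; 1];
  [:: 0; 1; 2; 0; 1; 2; 2; 1; 0; 2];
  [:: 0; 1; 2; 0; 1; 2; 2; 1; 1; 1];
  [:: 0; 1; 2; 0; 1; 2; 3; 0; 1; 1];
  [:: 0; 1; 2; 0; 2; 0; 2; -1; 1; 0];
  [:: 0; 1; 2; 0; 2; 1; 2; -1; 1; 0];
  [:: 0; 1; 2; 0; 2; 1; 2; 0; 0; 1];
  [:: 0; 1; 2; 0; 2; 1; 2; 0; 1; 0];
  [:: 0; 1; 2; 0; 2; 1; 2; 0; 1; 1];
  [:: 0; 1; 2; 0; 2; 1; 3; -1; 1; 0];
  [:: 0; 1; 2; 0; 2; 1; 3; -1; 1; 1];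
  [:: 0; 1; 2; 0; 2; 1; 3; -1; 2; 0];
  [:: 0; 1; 2; 0; 2; 1; 3; 0; 1; 1];
  [:: 0; 1; 2; 0; 2; 2; 3; 0; 1; 1];
  [:: 0; 1; 3; 0; 2; 2; 3; 0; 1; 1];
  [:: 0; 2; 3; 0; 2; 2; 3; 0; 1; 1]].
Definition NPlist : seq (seq int) := [:: [:: 1; 1; -1; 0; 0; 0; 0; 0; 0; 0];
  [:: 0; 0; 0; 0; 1; 0; -1; 0; 0; 0];
  [:: 1; 0; -1; 1; 1; 0; -1; 0; 0; 0];
  [:: 0; 0; 0; 0; 1; 0; -1; 0; 1; 0];
  [:: 0; 0; -1; 0; 1; 1; -1; 0; 0; 0];
  [:: 1; 0; -1; 0; 1; 0; -1; 0; 1; 0];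
  [:: 0; 0; -1; 0; 1; 0; -1; 1; 1; 0];
  [:: 1; 0; -1; 0; 1; 0; 0; 0; 0; 0];
  [:: 0; 0; 0; 0; 0; 0; -1; 0; 1; 1];
  [:: 0; 0; -1; 0; 1; 0; 0; 0; 0; 0]].
Definition Idlist : seq (seq int) := [:: [:: 1; 0; 0; 0; 0; 0; 0; 0; 0; 0];
  [:: 0; 1; 0; 0; 0; 0; 0; 0; 0; 0];
  [:: 0; 0; 1; 0; 0; 0; 0; 0; 0; 0];
  [:: 0; 0; 0; 1; 0; 0; 0; 0; 0; 0];
  [:: 0; 0; 0; 0; 1; 0; 0; 0; 0; 0];
  [:: 0; 0; 0; 0; 0; 1; 0; 0; 0; 0];
  [:: 0; 0; 0; 0; 0; 0; 1; 0; 0; 0];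
  [:: 0; 0; 0; 0; 0; 0; 0; 1; 0; 0];
  [:: 0; 0; 0; 0; 0; 0; 0; 0; 1; 0];
  [:: 0; 0; 0; 0; 0; 0; 0; 0; 0; 1]].
Module ZD.
Local Open Scope Z_scope.
Definition S0Zl : list (list Z) := [:: [:: 0; 0; 0; 0; 0; 0; 0; 0; 0; 0];
 [:: 0; -2; -3; 0; -2; -2; -3; 0; -1; -1];
 [:: 0; -1; -3; 0; -2; -2; -3; 0; -1; -1];
 [:: 0; -1; -2; 0; -2; -2; -3; 0; -1; -1];
 [:: 0; -1; -2; 0; -2; -1; -3; 0; -1; -1];
 [:: 0; -1; -2; 0; -2; -1; -3; 1; -2; 0];
 [:: 0; -1; -2; 0; -2; -1; -3; 1; -1; -1];
 [:: 0; -1; -2; 0; -2; -1; -3; 1; -1; 0];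
 [:: 0; -1; -2; 0; -2; -1; -2; 0; -1; -1];
 [:: 0; -1; -2; 0; -2; -1; -2; 0; -1; 0];
 [:: 0; -1; -2; 0; -2; -1; -2; 0; 0; -1];
 [:: 0; -1; -2; 0; -2; -1; -2; 1; -1; 0];
 [:: 0; -1; -2; 0; -2; 0; -2; 1; -1; 0];
 [:: 0; -1; -2; 0; -1; -2; -3; 0; -1; -1];
 [:: 0; -1; -2; 0; -1; -2; -2; -1; -1; -1];
 [:: 0; -1; -2; 0; -1; -2; -2; -1; 0; -2];
 [:: 0; -1; -2; 0; -1; -2; -2; -1; 0; -1];
 [:: 0; -1; -2; 0; -1; -2; -2; 0; -1; -1];
 [:: 0; -1; -2; 0; -1; -2; -2; 0; -1; 0];
 [:: 0; -1; -2; 0; -1; -2; -2; 0; 0; -1];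
 [:: 0; -1; -2; 0; -1; -2; -1; -1; 0; -1];
 [:: 0; -1; -2; 0; -1; -1; -2; 0; -1; -1];
 [:: 0; -1; -2; 0; -1; -1; -2; 0; -1; 0];
 [:: 0; -1; -2; 0; -1; -1; -2; 0; 0; -1];
 [:: 0; -1; -2; 0; -1; -1; -2; 1; -1; 0];
 [:: 0; -1; -2; 0; -1; -1; -1; -1; 0; -1];
 [:: 0; -1; -2; 0; -1; -1; -1; 0; -1; 0];
 [:: 0; -1; -2; 0; -1; -1; -1; 0; 0; -1];
 [:: 0; -1; -2; 0; -1; -1; -1; 0; 0; 0];
 [:: 0; -1; -2; 0; 0; -2; -1; -1; 0; -1];
 [:: 0; -1; -1; 0; -2; 0; -2; 1; -1; 0];
 [:: 0; -1; -1; 0; -1; -1; -2; 0; -1; -1];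
 [:: 0; -1; -1; 0; -1; -1; -2; 0; -1; 0];
 [:: 0; -1; -1; 0; -1; -1; -2; 0; 0; -1];
 [:: 0; -1; -1; 0; -1; -1; -2; 1; -1; 0];
 [:: 0; -1; -1; 0; -1; -1; -1; -1; 0; -1];
 [:: 0; -1; -1; 0; -1; -1; -1; 0; -1; 0];
 [:: 0; -1; -1; 0; -1; -1; -1; 0; 0; -1];
 [:: 0; -1; -1; 0; -1; -1; -1; 0; 0; 0];
 [:: 0; -1; -1; 0; -1; 0; -2; 1; -1; 0];
 [:: 0; -1; -1; 0; -1; 0; -1; 0; -1; 0];
 [:: 0; -1; -1; 0; -1; 0; -1; 0; 0; -1];
 [:: 0; -1; -1; 0; -1; 0; -1; 0; 0; 0];
 [:: 0; -1; -1; 0; -1; 0; -1; 1; -1; 0];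
 [:: 0; -1; -1; 0; -1; 0; -1; 1; -1; 1];
 [:: 0; -1; -1; 0; -1; 0; -1; 1; 0; 0];
 [:: 0; -1; -1; 0; -1; 0; 0; 0; 0; 0];
 [:: 0; -1; -1; 0; 0; -2; -1; -1; 0; -1];
 [:: 0; -1; -1; 0; 0; -1; -1; -1; 0; -1];
 [:: 0; -1; -1; 0; 0; -1; -1; 0; -1; 0];
 [:: 0; -1; -1; 0; 0; -1; -1; 0; 0; -1];
 [:: 0; -1; -1; 0; 0; -1; -1; 0; 0; 0];
 [:: 0; -1; -1; 0; 0; -1; 0; -1; 0; -1];
 [:: 0; -1; -1; 0; 0; -1; 0; -1; 0; 0];
 [:: 0; -1; -1; 0; 0; -1; 0; -1; 1; -1];
 [:: 0; -1; -1; 0; 0; -1; 0; 0; 0; 0];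
 [:: 0; -1; -1; 0; 0; 0; 0; 0; 0; 0];
 [:: 0; -1; 0; 0; 0; 0; 0; 0; 0; 0];
 [:: 0; 0; -1; 0; -2; 0; -2; 1; -1; 0];
 [:: 0; 0; -1; 0; -1; -1; -2; 0; -1; -1];
 [:: 0; 0; -1; 0; -1; -1; -2; 0; -1; 0];
 [:: 0; 0; -1; 0; -1; -1; -2; 0; 0; -1];
 [:: 0; 0; -1; 0; -1; -1; -2; 1; -1; 0];
 [:: 0; 0; -1; 0; -1; -1; -1; -1; 0; -1];
 [:: 0; 0; -1; 0; -1; -1; -1; 0; -1; 0];
 [:: 0; 0; -1; 0; -1; -1; -1; 0; 0; -1];
 [:: 0; 0; -1; 0; -1; -1; -1; 0; 0; 0];
 [:: 0; 0; -1; 0; -1; 0; -2; 1; -1; 0];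
 [:: 0; 0; -1; 0; -1; 0; -1; 0; -1; 0];
 [:: 0; 0; -1; 0; -1; 0; -1; 0; 0; -1];
 [:: 0; 0; -1; 0; -1; 0; -1; 0; 0; 0];
 [:: 0; 0; -1; 0; -1; 0; -1; 1; -1; 0];
 [:: 0; 0; -1; 0; -1; 0; -1; 1; -1; 1];
 [:: 0; 0; -1; 0; -1; 0; -1; 1; 0; 0];
 [:: 0; 0; -1; 0; -1; 0; 0; 0; 0; 0];
 [:: 0; 0; -1; 0; 0; -2; -1; -1; 0; -1];
 [:: 0; 0; -1; 0; 0; -1; -1; -1; 0; -1];
 [:: 0; 0; -1; 0; 0; -1; -1; 0; -1; 0];
 [:: 0; 0; -1; 0; 0; -1; -1; 0; 0; -1];
 [:: 0; 0; -1; 0; 0; -1; -1; 0; 0; 0];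
 [:: 0; 0; -1; 0; 0; -1; 0; -1; 0; -1];
 [:: 0; 0; -1; 0; 0; -1; 0; -1; 0; 0];
 [:: 0; 0; -1; 0; 0; -1; 0; -1; 1; -1];
 [:: 0; 0; -1; 0; 0; -1; 0; 0; 0; 0];
 [:: 0; 0; -1; 0; 0; 0; 0; 0; 0; 0];
 [:: 0; 0; 0; 0; -1; 0; -2; 1; -1; 0];
 [:: 0; 0; 0; 0; -1; 0; -1; 0; -1; 0];
 [:: 0; 0; 0; 0; -1; 0; -1; 0; 0; -1];
 [:: 0; 0; 0; 0; -1; 0; -1; 0; 0; 0];
 [:: 0; 0; 0; 0; -1; 0; -1; 1; -1; 0];
 [:: 0; 0; 0; 0; -1; 0; -1; 1; -1; 1];
 [:: 0; 0; 0; 0; -1; 0; -1; 1; 0; 0];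
 [:: 0; 0; 0; 0; -1; 0; 0; 0; 0; 0];
 [:: 0; 0; 0; 0; -1; 1; -1; 1; -1; 0];
 [:: 0; 0; 0; 0; -1; 1; -1; 1; -1; 1];
 [:: 0; 0; 0; 0; -1; 1; -1; 1; 0; 0];
 [:: 0; 0; 0; 0; -1; 1; -1; 2; -1; 1];
 [:: 0; 0; 0; 0; -1; 1; 0; 0; 0; 0];
 [:: 0; 0; 0; 0; -1; 1; 0; 1; -1; 1];
 [:: 0; 0; 0; 0; -1; 1; 0; 1; 0; 0];
 [:: 0; 0; 0; 0; -1; 1; 0; 1; 0; 1];
 [:: 0; 0; 0; 0; 0; -1; -1; -1; 0; -1];
 [:: 0; 0; 0; 0; 0; -1; -1; 0; -1; 0];
 [:: 0; 0; 0; 0; 0; -1; -1; 0; 0; -1];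
 [:: 0; 0; 0; 0; 0; -1; -1; 0; 0; 0];
 [:: 0; 0; 0; 0; 0; -1; 0; -1; 0; -1];
 [:: 0; 0; 0; 0; 0; -1; 0; -1; 0; 0];
 [:: 0; 0; 0; 0; 0; -1; 0; -1; 1; -1];
 [:: 0; 0; 0; 0; 0; -1; 0; 0; 0; 0];
 [:: 0; 0; 0; 0; 0; 0; -1; 0; -1; 0];
 [:: 0; 0; 0; 0; 0; 0; -1; 0; 0; -1];
 [:: 0; 0; 0; 0; 0; 0; -1; 0; 0; 0];
 [:: 0; 0; 0; 0; 0; 0; -1; 1; -1; 0];
 [:: 0; 0; 0; 0; 0; 0; -1; 1; -1; 1];
 [:: 0; 0; 0; 0; 0; 0; -1; 1; 0; 0];
 [:: 0; 0; 0; 0; 0; 0; 0; -1; 0; -1];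
 [:: 0; 0; 0; 0; 0; 0; 0; -1; 0; 0];
 [:: 0; 0; 0; 0; 0; 0; 0; -1; 1; -1];
 [:: 0; 0; 0; 0; 0; 0; 0; 0; -1; 0];
 [:: 0; 0; 0; 0; 0; 0; 0; 0; -1; 1];
 [:: 0; 0; 0; 0; 0; 0; 0; 0; 0; -1];
 [:: 0; 0; 0; 0; 0; 0; 0; 0; 0; 1];
 [:: 0; 0; 0; 0; 0; 0; 0; 0; 1; -1];
 [:: 0; 0; 0; 0; 0; 0; 0; 0; 1; 0];
 [:: 0; 0; 0; 0; 0; 0; 0; 1; -1; 1];
 [:: 0; 0; 0; 0; 0; 0; 0; 1; 0; 0];
 [:: 0; 0; 0; 0; 0; 0; 0; 1; 0; 1];
 [:: 0; 0; 0; 0; 0; 0; 1; -1; 0; 0];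
 [:: 0; 0; 0; 0; 0; 0; 1; -1; 1; -1];
 [:: 0; 0; 0; 0; 0; 0; 1; -1; 1; 0];
 [:: 0; 0; 0; 0; 0; 0; 1; 0; 0; 0];
 [:: 0; 0; 0; 0; 0; 0; 1; 0; 0; 1];
 [:: 0; 0; 0; 0; 0; 0; 1; 0; 1; 0];
 [:: 0; 0; 0; 0; 0; 1; 0; 0; 0; 0];
 [:: 0; 0; 0; 0; 0; 1; 0; 1; -1; 1];
 [:: 0; 0; 0; 0; 0; 1; 0; 1; 0; 0];
 [:: 0; 0; 0; 0; 0; 1; 0; 1; 0; 1];
 [:: 0; 0; 0; 0; 0; 1; 1; 0; 0; 0];
 [:: 0; 0; 0; 0; 0; 1; 1; 0; 0; 1];
 [:: 0; 0; 0; 0; 0; 1; 1; 0; 1; 0];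
 [:: 0; 0; 0; 0; 0; 1; 1; 1; 0; 1];
 [:: 0; 0; 0; 0; 1; -1; 0; -1; 0; -1];
 [:: 0; 0; 0; 0; 1; -1; 0; -1; 0; 0];
 [:: 0; 0; 0; 0; 1; -1; 0; -1; 1; -1];
 [:: 0; 0; 0; 0; 1; -1; 0; 0; 0; 0];
 [:: 0; 0; 0; 0; 1; -1; 1; -2; 1; -1];
 [:: 0; 0; 0; 0; 1; -1; 1; -1; 0; 0];
 [:: 0; 0; 0; 0; 1; -1; 1; -1; 1; -1];
 [:: 0; 0; 0; 0; 1; -1; 1; -1; 1; 0];
 [:: 0; 0; 0; 0; 1; 0; 0; 0; 0; 0];
 [:: 0; 0; 0; 0; 1; 0; 1; -1; 0; 0];
 [:: 0; 0; 0; 0; 1; 0; 1; -1; 1; -1];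
 [:: 0; 0; 0; 0; 1; 0; 1; -1; 1; 0];
 [:: 0; 0; 0; 0; 1; 0; 1; 0; 0; 0];
 [:: 0; 0; 0; 0; 1; 0; 1; 0; 0; 1];
 [:: 0; 0; 0; 0; 1; 0; 1; 0; 1; 0];
 [:: 0; 0; 0; 0; 1; 0; 2; -1; 1; 0];
 [:: 0; 0; 1; 0; 0; 0; 0; 0; 0; 0];
 [:: 0; 0; 1; 0; 0; 1; 0; 0; 0; 0];
 [:: 0; 0; 1; 0; 0; 1; 0; 1; -1; 1];
 [:: 0; 0; 1; 0; 0; 1; 0; 1; 0; 0];
 [:: 0; 0; 1; 0; 0; 1; 0; 1; 0; 1];
 [:: 0; 0; 1; 0; 0; 1; 1; 0; 0; 0];
 [:: 0; 0; 1; 0; 0; 1; 1; 0; 0; 1];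
 [:: 0; 0; 1; 0; 0; 1; 1; 0; 1; 0];
 [:: 0; 0; 1; 0; 0; 1; 1; 1; 0; 1];
 [:: 0; 0; 1; 0; 0; 2; 1; 1; 0; 1];
 [:: 0; 0; 1; 0; 1; 0; 0; 0; 0; 0];
 [:: 0; 0; 1; 0; 1; 0; 1; -1; 0; 0];
 [:: 0; 0; 1; 0; 1; 0; 1; -1; 1; -1];
 [:: 0; 0; 1; 0; 1; 0; 1; -1; 1; 0];
 [:: 0; 0; 1; 0; 1; 0; 1; 0; 0; 0];
 [:: 0; 0; 1; 0; 1; 0; 1; 0; 0; 1];
 [:: 0; 0; 1; 0; 1; 0; 1; 0; 1; 0];
 [:: 0; 0; 1; 0; 1; 0; 2; -1; 1; 0];
 [:: 0; 0; 1; 0; 1; 1; 1; 0; 0; 0];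
 [:: 0; 0; 1; 0; 1; 1; 1; 0; 0; 1];
 [:: 0; 0; 1; 0; 1; 1; 1; 0; 1; 0];
 [:: 0; 0; 1; 0; 1; 1; 1; 1; 0; 1];
 [:: 0; 0; 1; 0; 1; 1; 2; -1; 1; 0];
 [:: 0; 0; 1; 0; 1; 1; 2; 0; 0; 1];
 [:: 0; 0; 1; 0; 1; 1; 2; 0; 1; 0];
 [:: 0; 0; 1; 0; 1; 1; 2; 0; 1; 1];
 [:: 0; 0; 1; 0; 2; 0; 2; -1; 1; 0];
 [:: 0; 1; 0; 0; 0; 0; 0; 0; 0; 0];
 [:: 0; 1; 1; 0; 0; 0; 0; 0; 0; 0];
 [:: 0; 1; 1; 0; 0; 1; 0; 0; 0; 0];
 [:: 0; 1; 1; 0; 0; 1; 0; 1; -1; 1];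
 [:: 0; 1; 1; 0; 0; 1; 0; 1; 0; 0];
 [:: 0; 1; 1; 0; 0; 1; 0; 1; 0; 1];
 [:: 0; 1; 1; 0; 0; 1; 1; 0; 0; 0];
 [:: 0; 1; 1; 0; 0; 1; 1; 0; 0; 1];
 [:: 0; 1; 1; 0; 0; 1; 1; 0; 1; 0];
 [:: 0; 1; 1; 0; 0; 1; 1; 1; 0; 1];
 [:: 0; 1; 1; 0; 0; 2; 1; 1; 0; 1];
 [:: 0; 1; 1; 0; 1; 0; 0; 0; 0; 0];
 [:: 0; 1; 1; 0; 1; 0; 1; -1; 0; 0];
 [:: 0; 1; 1; 0; 1; 0; 1; -1; 1; -1];
 [:: 0; 1; 1; 0; 1; 0; 1; -1; 1; 0];
 [:: 0; 1; 1; 0; 1; 0; 1; 0; 0; 0];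
 [:: 0; 1; 1; 0; 1; 0; 1; 0; 0; 1];
 [:: 0; 1; 1; 0; 1; 0; 1; 0; 1; 0];
 [:: 0; 1; 1; 0; 1; 0; 2; -1; 1; 0];
 [:: 0; 1; 1; 0; 1; 1; 1; 0; 0; 0];
 [:: 0; 1; 1; 0; 1; 1; 1; 0; 0; 1];
 [:: 0; 1; 1; 0; 1; 1; 1; 0; 1; 0];
 [:: 0; 1; 1; 0; 1; 1; 1; 1; 0; 1];
 [:: 0; 1; 1; 0; 1; 1; 2; -1; 1; 0];
 [:: 0; 1; 1; 0; 1; 1; 2; 0; 0; 1];
 [:: 0; 1; 1; 0; 1; 1; 2; 0; 1; 0];
 [:: 0; 1; 1; 0; 1; 1; 2; 0; 1; 1];
 [:: 0; 1; 1; 0; 2; 0; 2; -1; 1; 0];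
 [:: 0; 1; 2; 0; 0; 2; 1; 1; 0; 1];
 [:: 0; 1; 2; 0; 1; 1; 1; 0; 0; 0];
 [:: 0; 1; 2; 0; 1; 1; 1; 0; 0; 1];
 [:: 0; 1; 2; 0; 1; 1; 1; 0; 1; 0];
 [:: 0; 1; 2; 0; 1; 1; 1; 1; 0; 1];
 [:: 0; 1; 2; 0; 1; 1; 2; -1; 1; 0];
 [:: 0; 1; 2; 0; 1; 1; 2; 0; 0; 1];
 [:: 0; 1; 2; 0; 1; 1; 2; 0; 1; 0];
 [:: 0; 1; 2; 0; 1; 1; 2; 0; 1; 1];
 [:: 0; 1; 2; 0; 1; 2; 1; 1; 0; 1];
 [:: 0; 1; 2; 0; 1; 2; 2; 0; 0; 1];
 [:: 0; 1; 2; 0; 1; 2; 2; 0; 1; 0];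
 [:: 0; 1; 2; 0; 1; 2; 2; 0; 1; 1];
 [:: 0; 1; 2; 0; 1; 2; 2; 1; 0; 1];
 [:: 0; 1; 2; 0; 1; 2; 2; 1; 0; 2];
 [:: 0; 1; 2; 0; 1; 2; 2; 1; 1; 1];
 [:: 0; 1; 2; 0; 1; 2; 3; 0; 1; 1];
 [:: 0; 1; 2; 0; 2; 0; 2; -1; 1; 0];
 [:: 0; 1; 2; 0; 2; 1; 2; -1; 1; 0];
 [:: 0; 1; 2; 0; 2; 1; 2; 0; 0; 1];
 [:: 0; 1; 2; 0; 2; 1; 2; 0; 1; 0];
 [:: 0; 1; 2; 0; 2; 1; 2; 0; 1; 1];
 [:: 0; 1; 2; 0; 2; 1; 3; -1; 1; 0];
 [:: 0; 1; 2; 0; 2; 1; 3; -1; 1; 1];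
 [:: 0; 1; 2; 0; 2; 1; 3; -1; 2; 0];
 [:: 0; 1; 2; 0; 2; 1; 3; 0; 1; 1];
 [:: 0; 1; 2; 0; 2; 2; 3; 0; 1; 1];
 [:: 0; 1; 3; 0; 2; 2; 3; 0; 1; 1];
 [:: 0; 2; 3; 0; 2; 2; 3; 0; 1; 1]].
End ZD.
Notation S0Zl := ZD.S0Zl.
Definition dotL (r t : seq int) : int :=
  foldr (fun k acc => nth 0 r k * nth 0 t k + acc) 0 (iota 0 10).
Definition mulL (S : seq (seq int)) (t : seq int) : seq int := map (fun r => dotL r t) S.
Definition PL (t : seq int) : seq int := mulL Plist t.
Definition formL (s t : seq int) : int := dotL s (mulL Elist t).
Definition qL (t : seq int) : int := formL t t.
Definition h0l : seq int := [:: 1; 1; 3; 0; 2; 2; 3; 0; 1; 1].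
Definition hil : seq int := [:: 0; 1; 1; 1; 0; 2; 1; 1; 0; 1].
Definition zeros : seq int := nseq 10 0.
Definition DL (m : seq int) (a b : int) : seq int :=
  [seq nth 0 m k + a * nth 0 h0l k + b * nth 0 hil k | k <- iota 0 10].
Definition addL (s t : seq int) : seq int := [seq nth 0 s k + nth 0 t k | k <- iota 0 10].
Definition nfL (t : seq int) : seq int :=
  [seq nth 0 t k - nth 0 t 0 * nth 0 h0l k - nth 0 t 3 * nth 0 hil k | k <- iota 0 10].
Definition perL (t : seq int) : nat := head 0%N [seq j <- iota 1 6 | iter j PL t == t].
Definition sumL (p : nat) (t : seq int) : seq int := foldr addL zeros [seq iter j PL t | j <- iota 1 p].
Definition uL (t : seq int) : int := nth 0 (sumL (perL t) t) 0.
Definition wL (t : seq int) : int := nth 0 (sumL (perL t) t) 3.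
Definition mk8 (y1 y2 y4 y5 y6 y7 y8 y9 : int) : seq int := [:: 0; y1; y2; 0; y4; y5; y6; y7; y8; y9].
Definition qexp (y1 y2 y4 y5 y6 y7 y8 y9 : int) : int :=
  y1*y1 - y1*y2 + y2*y2 - y2*y4 - y2*y5 + y4*y4 + y4*y5 - y4*y6 + y5*y5 - y5*y6 - y5*y7
  + y6*y6 + y6*y7 - y6*y8 - y6*y9 + y7*y7 - y7*y9 + y8*y8 + y8*y9 + y9*y9.

Definition T2 : bool := all (fun m => let p := perL m in
  [&& size m == 10%N, nth 0 m 0 == 0, nth 0 m 3 == 0, (0 < p)%N, iter p PL m == m,
      all (fun k => iter k PL m != m) (iota 1 p.-1),
      sumL p m == DL zeros (uL m) (wL m),
      p%:Z * formL m hil == 6 * uL m, p%:Z * formL h0l m == 6 * wL m &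
      if m == zeros then qL m == 0 else qL m == 1]) S0.
Lemma T2_ok : T2. Proof. by vm_compute. Qed.
Definition T3 : bool := all (fun m => (perL m == 1%N) ==> (m == zeros)) S0.
Lemma T3_ok : T3. Proof. by vm_compute. Qed.
Lemma zeros_data : [/\ zeros \in S0, perL zeros = 1%N, uL zeros = 0 & wL zeros = 0].
Proof. by vm_compute. Qed.
Definition T4 : bool := all (fun m => (1 < perL m)%N ==>
   ~~ ((((perL m)%:Z %| uL m)%Z && ((perL m)%:Z %| wL m)%Z))) S0.
Lemma T4_ok : T4. Proof. by vm_compute. Qed.
Definition fcl (m : seq int) : nat * int * int := (perL m, uL m, wL m).
Definition cls_ok (i p r : nat) (c : nat * int * int) : bool :=
  (c.1.1 == i) && ((c.1.2 %% i%:Z)%Z == p%:Z) && ((c.2 %% i%:Z)%Z == r%:Z).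
Definition mlist (i p r : nat) : seq (seq int) := [seq m <- S0 | cls_ok i p r (fcl m)].
Definition T5 : bool := let tab := map fcl S0 in all (fun i => all (fun p => all (fun r =>
   ((p != 0) || (r != 0))%N ==> (count (cls_ok i p r) tab == i)) (iota 0 i)) (iota 0 i)) [:: 2; 3; 6]%N.
Lemma T5_ok : T5. Proof. by vm_compute. Qed.
Definition T6 : bool := all (fun m => let n := PL m in let m' := nfL n in
   [&& m' \in S0, perL m' == perL m, uL m' + (perL m)%:Z * nth 0 n 0 == uL m &
       wL m' + (perL m)%:Z * nth 0 n 3 == wL m]) S0.
Lemma T6_ok : T6. Proof. by vm_compute. Qed.
Lemma S0_uniq : uniq S0. Proof. by vm_compute. Qed.
Module ZB.
Local Open Scope Z_scope.
Definition qexpZ (y1 y2 y4 y5 y6 y7 y8 y9 : Z) : Z :=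
  y1*y1 - y1*y2 + y2*y2 - y2*y4 - y2*y5 + y4*y4 + y4*y5 - y4*y6 + y5*y5 - y5*y6 - y5*y7
  + y6*y6 + y6*y7 - y6*y8 - y6*y9 + y7*y7 - y7*y9 + y8*y8 + y8*y9 + y9*y9.
Lemma bnd0 y1 y2 y4 y5 y6 y7 y8 y9 : qexpZ y1 y2 y4 y5 y6 y7 y8 y9 <= 1 -> -2 <= y1 <= 2.
Proof.
intros H.
assert (E : 30*(4*qexpZ y1 y2 y4 y5 y6 y7 y8 y9 - y1*y1) = 10*((3)*y1 + (-2)*y2)*((3)*y1 + (-2)*y2) + 5*((4)*y2 + (-3)*y4 + (-3)*y5)*((4)*y2 + (-3)*y4 + (-3)*y5) + 3*((5)*y4 + (1)*y5 + (-4)*y6)*((5)*y4 + (1)*y5 + (-4)*y6) + 2*((6)*y5 + (-4)*y6 + (-5)*y7)*((6)*y5 + (-4)*y6 + (-5)*y7) + 10*((2)*y6 + (1)*y7 + (-3)*y8 + (-3)*y9)*((2)*y6 + (1)*y7 + (-3)*y8 + (-3)*y9) + 15*((2)*y7 + (1)*y8 + (-1)*y9)*((2)*y7 + (1)*y8 + (-1)*y9) + 15*((1)*y8 + (-1)*y9)*((1)*y8 + (-1)*y9)) by (unfold qexpZ; ring).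
assert (S0 := Z.square_nonneg ((3)*y1 + (-2)*y2)).
assert (S1 := Z.square_nonneg ((4)*y2 + (-3)*y4 + (-3)*y5)).
assert (S2 := Z.square_nonneg ((5)*y4 + (1)*y5 + (-4)*y6)).
assert (S3 := Z.square_nonneg ((6)*y5 + (-4)*y6 + (-5)*y7)).
assert (S4 := Z.square_nonneg ((2)*y6 + (1)*y7 + (-3)*y8 + (-3)*y9)).
assert (S5 := Z.square_nonneg ((2)*y7 + (1)*y8 + (-1)*y9)).
assert (S6 := Z.square_nonneg ((1)*y8 + (-1)*y9)).
nia.
Qed.
Lemma bnd1 y1 y2 y4 y5 y6 y7 y8 y9 : qexpZ y1 y2 y4 y5 y6 y7 y8 y9 <= 1 -> -3 <= y2 <= 3.
Proof.
intros H.
assert (E : 10*(12*qexpZ y1 y2 y4 y5 y6 y7 y8 y9 - y2*y2) = 30*((2)*y1 + (-1)*y2)*((2)*y1 + (-1)*y2) + 5*((4)*y2 + (-3)*y4 + (-3)*y5)*((4)*y2 + (-3)*y4 + (-3)*y5) + 3*((5)*y4 + (1)*y5 + (-4)*y6)*((5)*y4 + (1)*y5 + (-4)*y6) + 2*((6)*y5 + (-4)*y6 + (-5)*y7)*((6)*y5 + (-4)*y6 + (-5)*y7) + 10*((2)*y6 + (1)*y7 + (-3)*y8 + (-3)*y9)*((2)*y6 + (1)*y7 + (-3)*y8 + (-3)*y9) + 15*((2)*y7 + (1)*y8 + (-1)*y9)*((2)*y7 + (1)*y8 + (-1)*y9) + 15*((1)*y8 + (-1)*y9)*((1)*y8 +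 (-1)*y9)) by (unfold qexpZ; ring).
assert (S0 := Z.square_nonneg ((2)*y1 + (-1)*y2)).
assert (S1 := Z.square_nonneg ((4)*y2 + (-3)*y4 + (-3)*y5)).
assert (S2 := Z.square_nonneg ((5)*y4 + (1)*y5 + (-4)*y6)).
assert (S3 := Z.square_nonneg ((6)*y5 + (-4)*y6 + (-5)*y7)).
assert (S4 := Z.square_nonneg ((2)*y6 + (1)*y7 + (-3)*y8 + (-3)*y9)).
assert (S5 := Z.square_nonneg ((2)*y7 + (1)*y8 + (-1)*y9)).
assert (S6 := Z.square_nonneg ((1)*y8 + (-1)*y9)).
nia.
Qed.
Lemma bnd2 y1 y2 y4 y5 y6 y7 y8 y9 : qexpZ y1 y2 y4 y5 y6 y7 y8 y9 <= 1 -> -2 <= y4 <= 2.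
Proof.
intros H.
assert (E : 8580*(8*qexpZ y1 y2 y4 y5 y6 y7 y8 y9 - y4*y4) = 17160*((2)*y1 + (-1)*y2)*((2)*y1 + (-1)*y2) + 5720*((3)*y2 + (-2)*y4 + (-2)*y5)*((3)*y2 + (-2)*y4 + (-2)*y5) + 220*((13)*y4 + (4)*y5 + (-12)*y6)*((13)*y4 + (4)*y5 + (-12)*y6) + 165*((16)*y5 + (-9)*y6 + (-13)*y7)*((16)*y5 + (-9)*y6 + (-13)*y7) + 195*((11)*y6 + (7)*y7 + (-16)*y8 + (-16)*y9)*((11)*y6 + (7)*y7 + (-16)*y8 + (-16)*y9) + 312*((10)*y7 + (7)*y8 + (-4)*y9)*((10)*y7 + (7)*y8 + (-4)*y9) + 3432*((1)*y8 + (-2)*y9)*((1)*y8 + (-2)*y9)) by (unfold qexpZ; ring).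
assert (S0 := Z.square_nonneg ((2)*y1 + (-1)*y2)).
assert (S1 := Z.square_nonneg ((3)*y2 + (-2)*y4 + (-2)*y5)).
assert (S2 := Z.square_nonneg ((13)*y4 + (4)*y5 + (-12)*y6)).
assert (S3 := Z.square_nonneg ((16)*y5 + (-9)*y6 + (-13)*y7)).
assert (S4 := Z.square_nonneg ((11)*y6 + (7)*y7 + (-16)*y8 + (-16)*y9)).
assert (S5 := Z.square_nonneg ((10)*y7 + (7)*y8 + (-4)*y9)).
assert (S6 := Z.square_nonneg ((1)*y8 + (-2)*y9)).
nia.
Qed.
Lemma bnd3 y1 y2 y4 y5 y6 y7 y8 y9 : qexpZ y1 y2 y4 y5 y6 y7 y8 y9 <= 1 -> -2 <= y5 <= 2.
Proof.
intros H.
assert (E : 660*(8*qexpZ y1 y2 y4 y5 y6 y7 y8 y9 - y5*y5) = 1320*((2)*y1 + (-1)*y2)*((2)*y1 + (-1)*y2) + 440*((3)*y2 + (-2)*y4 + (-2)*y5)*((3)*y2 + (-2)*y4 + (-2)*y5) + 220*((4)*y4 + (1)*y5 + (-3)*y6)*((4)*y4 + (1)*y5 + (-3)*y6) + 165*((4)*y5 + (-3)*y6 + (-4)*y7)*((4)*y5 + (-3)*y6 + (-4)*y7) + 15*((11)*y6 + (4)*y7 + (-16)*y8 + (-16)*y9)*((11)*y6 + (4)*y7 + (-16)*y8 + (-16)*y9) + 24*((10)*y7 + (4)*y8 + (-7)*y9)*((10)*y7 + (4)*y8 + (-7)*y9) + 264*((2)*y8 + (-1)*y9)*((2)*y8 +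 (-1)*y9)) by (unfold qexpZ; ring).
assert (S0 := Z.square_nonneg ((2)*y1 + (-1)*y2)).
assert (S1 := Z.square_nonneg ((3)*y2 + (-2)*y4 + (-2)*y5)).
assert (S2 := Z.square_nonneg ((4)*y4 + (1)*y5 + (-3)*y6)).
assert (S3 := Z.square_nonneg ((4)*y5 + (-3)*y6 + (-4)*y7)).
assert (S4 := Z.square_nonneg ((11)*y6 + (4)*y7 + (-16)*y8 + (-16)*y9)).
assert (S5 := Z.square_nonneg ((10)*y7 + (4)*y8 + (-7)*y9)).
assert (S6 := Z.square_nonneg ((2)*y8 + (-1)*y9)).
nia.
Qed.
Lemma bnd4 y1 y2 y4 y5 y6 y7 y8 y9 : qexpZ y1 y2 y4 y5 y6 y7 y8 y9 <= 1 -> -4 <= y6 <= 4.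
Proof.
intros H.
assert (E : 1755*(16*qexpZ y1 y2 y4 y5 y6 y7 y8 y9 - y6*y6) = 7020*((2)*y1 + (-1)*y2)*((2)*y1 + (-1)*y2) + 2340*((3)*y2 + (-2)*y4 + (-2)*y5)*((3)*y2 + (-2)*y4 + (-2)*y5) + 1170*((4)*y4 + (1)*y5 + (-3)*y6)*((4)*y4 + (1)*y5 + (-3)*y6) + 702*((5)*y5 + (-3)*y6 + (-4)*y7)*((5)*y5 + (-3)*y6 + (-4)*y7) + 13*((27)*y6 + (16)*y7 + (-40)*y8 + (-40)*y9)*((27)*y6 + (16)*y7 + (-40)*y8 + (-40)*y9) + 20*((26)*y7 + (16)*y8 + (-11)*y9)*((26)*y7 + (16)*y8 + (-11)*y9) + 540*((2)*y8 + (-3)*y9)*((2)*y8 + (-3)*y9)) by (unfold qexpZ; ring).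
assert (S0 := Z.square_nonneg ((2)*y1 + (-1)*y2)).
assert (S1 := Z.square_nonneg ((3)*y2 + (-2)*y4 + (-2)*y5)).
assert (S2 := Z.square_nonneg ((4)*y4 + (1)*y5 + (-3)*y6)).
assert (S3 := Z.square_nonneg ((5)*y5 + (-3)*y6 + (-4)*y7)).
assert (S4 := Z.square_nonneg ((27)*y6 + (16)*y7 + (-40)*y8 + (-40)*y9)).
assert (S5 := Z.square_nonneg ((26)*y7 + (16)*y8 + (-11)*y9)).
assert (S6 := Z.square_nonneg ((2)*y8 + (-3)*y9)).
nia.
Qed.
Lemma bnd5 y1 y2 y4 y5 y6 y7 y8 y9 : qexpZ y1 y2 y4 y5 y6 y7 y8 y9 <= 1 -> -2 <= y7 <= 2.
Proof.
intros H.
assert (E : 30*(4*qexpZ y1 y2 y4 y5 y6 y7 y8 y9 - y7*y7) = 30*((2)*y1 + (-1)*y2)*((2)*y1 + (-1)*y2) + 10*((3)*y2 + (-2)*y4 + (-2)*y5)*((3)*y2 + (-2)*y4 + (-2)*y5) + 5*((4)*y4 + (1)*y5 + (-3)*y6)*((4)*y4 + (1)*y5 + (-3)*y6) + 3*((5)*y5 + (-3)*y6 + (-4)*y7)*((5)*y5 + (-3)*y6 + (-4)*y7) + 3*((4)*y6 + (2)*y7 + (-5)*y8 + (-5)*y9)*((4)*y6 + (2)*y7 + (-5)*y8 + (-5)*y9) + 30*((1)*y7 + (1)*y8 + (-1)*y9)*((1)*y7 + (1)*y8 + (-1)*y9) + 15*((1)*y8 + (1)*y9)*((1)*y8 + (1)*y9))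 by (unfold qexpZ; ring).
assert (S0 := Z.square_nonneg ((2)*y1 + (-1)*y2)).
assert (S1 := Z.square_nonneg ((3)*y2 + (-2)*y4 + (-2)*y5)).
assert (S2 := Z.square_nonneg ((4)*y4 + (1)*y5 + (-3)*y6)).
assert (S3 := Z.square_nonneg ((5)*y5 + (-3)*y6 + (-4)*y7)).
assert (S4 := Z.square_nonneg ((4)*y6 + (2)*y7 + (-5)*y8 + (-5)*y9)).
assert (S5 := Z.square_nonneg ((1)*y7 + (1)*y8 + (-1)*y9)).
assert (S6 := Z.square_nonneg ((1)*y8 + (1)*y9)).
nia.
Qed.
Lemma bnd6 y1 y2 y4 y5 y6 y7 y8 y9 : qexpZ y1 y2 y4 y5 y6 y7 y8 y9 <= 1 -> -2 <= y8 <= 2.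
Proof.
intros H.
assert (E : 30*(4*qexpZ y1 y2 y4 y5 y6 y7 y8 y9 - y8*y8) = 30*((2)*y1 + (-1)*y2)*((2)*y1 + (-1)*y2) + 10*((3)*y2 + (-2)*y4 + (-2)*y5)*((3)*y2 + (-2)*y4 + (-2)*y5) + 5*((4)*y4 + (1)*y5 + (-3)*y6)*((4)*y4 + (1)*y5 + (-3)*y6) + 3*((5)*y5 + (-3)*y6 + (-4)*y7)*((5)*y5 + (-3)*y6 + (-4)*y7) + 3*((4)*y6 + (2)*y7 + (-5)*y8 + (-5)*y9)*((4)*y6 + (2)*y7 + (-5)*y8 + (-5)*y9) + 15*((2)*y7 + (1)*y8 + (-1)*y9)*((2)*y7 + (1)*y8 + (-1)*y9) + 30*((1)*y9)*((1)*y9)) by (unfold qexpZ; ring).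
assert (S0 := Z.square_nonneg ((2)*y1 + (-1)*y2)).
assert (S1 := Z.square_nonneg ((3)*y2 + (-2)*y4 + (-2)*y5)).
assert (S2 := Z.square_nonneg ((4)*y4 + (1)*y5 + (-3)*y6)).
assert (S3 := Z.square_nonneg ((5)*y5 + (-3)*y6 + (-4)*y7)).
assert (S4 := Z.square_nonneg ((4)*y6 + (2)*y7 + (-5)*y8 + (-5)*y9)).
assert (S5 := Z.square_nonneg ((2)*y7 + (1)*y8 + (-1)*y9)).
assert (S6 := Z.square_nonneg ((1)*y9)).
nia.
Qed.
Lemma bnd7 y1 y2 y4 y5 y6 y7 y8 y9 : qexpZ y1 y2 y4 y5 y6 y7 y8 y9 <= 1 -> -2 <= y9 <= 2.
Proof.
intros H.
assert (E : 30*(4*qexpZ y1 y2 y4 y5 y6 y7 y8 y9 - y9*y9) = 30*((2)*y1 + (-1)*y2)*((2)*y1 + (-1)*y2) + 10*((3)*y2 + (-2)*y4 + (-2)*y5)*((3)*y2 + (-2)*y4 + (-2)*y5) + 5*((4)*y4 + (1)*y5 + (-3)*y6)*((4)*y4 + (1)*y5 + (-3)*y6) + 3*((5)*y5 + (-3)*y6 + (-4)*y7)*((5)*y5 + (-3)*y6 + (-4)*y7) + 3*((4)*y6 + (2)*y7 + (-5)*y8 + (-5)*y9)*((4)*y6 + (2)*y7 + (-5)*y8 + (-5)*y9) + 15*((2)*y7 + (1)*y8 + (-1)*y9)*((2)*y7 + (1)*y8 + (-1)*y9) + 30*((1)*y8)*((1)*y8)) by (unfold qexpZ; ring).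
assert (S0 := Z.square_nonneg ((2)*y1 + (-1)*y2)).
assert (S1 := Z.square_nonneg ((3)*y2 + (-2)*y4 + (-2)*y5)).
assert (S2 := Z.square_nonneg ((4)*y4 + (1)*y5 + (-3)*y6)).
assert (S3 := Z.square_nonneg ((5)*y5 + (-3)*y6 + (-4)*y7)).
assert (S4 := Z.square_nonneg ((4)*y6 + (2)*y7 + (-5)*y8 + (-5)*y9)).
assert (S5 := Z.square_nonneg ((2)*y7 + (1)*y8 + (-1)*y9)).
assert (S6 := Z.square_nonneg ((1)*y8)).
nia.
Qed.
End ZB.
Module ZC.
Local Open Scope Z_scope.
Definition rngZ (b : Z) : list Z := List.map (fun k => Z.of_nat k - b) (List.seq 0 (Z.to_nat (2*b+1))).
Fixpoint leqbZ (s t : list Z) : bool :=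
  match s, t with
  | nil, nil => true
  | x :: s', y :: t' => Z.eqb x y && leqbZ s' t'
  | _, _ => false
  end.
Definition memZ (m : list Z) : bool := List.existsb (fun s => leqbZ s m) S0Zl.
Definition mk8Z (y1 y2 y4 y5 y6 y7 y8 y9 : Z) : list Z := [:: 0; y1; y2; 0; y4; y5; y6; y7; y8; y9].
Definition boxZ : bool :=
 List.forallb (fun y1 => List.forallb (fun y2 => List.forallb (fun y4 => List.forallb (fun y5 => List.forallb (fun y6 =>
 List.forallb (fun y7 => List.forallb (fun y8 => List.forallb (fun y9 =>
   let q := ZB.qexpZ y1 y2 y4 y5 y6 y7 y8 y9 in
   if (Z.eqb q 0 || Z.eqb q 1) then memZ (mk8Z y1 y2 y4 y5 y6 y7 y8 y9) else true) (rngZ 2)) (rngZ 2)) (rngZ 2)) (rngZ 4)) (rngZ 2)) (rngZ 2)) (rngZ 3)) (rngZ 2).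
Lemma boxZ_ok : boxZ = true. Proof. vm_compute. reflexivity. Qed.
Lemma in_rngZ b y : 0 <= b -> -b <= y <= b -> List.In y (rngZ b).
Proof.
move=> Hb Hy; apply List.in_map_iff; exists (Z.to_nat (y + b)); split; first lia.
apply List.in_seq; lia.
Qed.
Lemma leqbZ_eq s t : leqbZ s t = true -> s = t.
Proof.
elim: s t => [|x s IH] [|y t] //= /andP [/Z.eqb_eq -> /IH ->] //.
Qed.
Lemma box_mem y1 y2 y4 y5 y6 y7 y8 y9 :
  ZB.qexpZ y1 y2 y4 y5 y6 y7 y8 y9 = 0 \/ ZB.qexpZ y1 y2 y4 y5 y6 y7 y8 y9 = 1 ->
  exists2 s, List.In s S0Zl & s = mk8Z y1 y2 y4 y5 y6 y7 y8 y9.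
Proof.
move=> Hq.
have Hle : ZB.qexpZ y1 y2 y4 y5 y6 y7 y8 y9 <= 1 by lia.
have B0 := ZB.bnd0 _ _ _ _ _ _ _ _ Hle; have B1 := ZB.bnd1 _ _ _ _ _ _ _ _ Hle; have B2 := ZB.bnd2 _ _ _ _ _ _ _ _ Hle; have B3 := ZB.bnd3 _ _ _ _ _ _ _ _ Hle.
have B4 := ZB.bnd4 _ _ _ _ _ _ _ _ Hle; have B5 := ZB.bnd5 _ _ _ _ _ _ _ _ Hle; have B6 := ZB.bnd6 _ _ _ _ _ _ _ _ Hle; have B7 := ZB.bnd7 _ _ _ _ _ _ _ _ Hle.
have := boxZ_ok; rewrite /boxZ => H.
move/List.forallb_forall: H => /(_ y1 (in_rngZ 2 _ ltac:(lia) B0)) H.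
move/List.forallb_forall: H => /(_ y2 (in_rngZ 3 _ ltac:(lia) B1)) H.
move/List.forallb_forall: H => /(_ y4 (in_rngZ 2 _ ltac:(lia) B2)) H.
move/List.forallb_forall: H => /(_ y5 (in_rngZ 2 _ ltac:(lia) B3)) H.
move/List.forallb_forall: H => /(_ y6 (in_rngZ 4 _ ltac:(lia) B4)) H.
move/List.forallb_forall: H => /(_ y7 (in_rngZ 2 _ ltac:(lia) B5)) H.
move/List.forallb_forall: H => /(_ y8 (in_rngZ 2 _ ltac:(lia) B6)) H.
move/List.forallb_forall: H => /(_ y9 (in_rngZ 2 _ ltac:(lia) B7)).
have -> : (Z.eqb (ZB.qexpZ y1 y2 y4 y5 y6 y7 y8 y9) 0 || Z.eqb (ZB.qexpZ y1 y2 y4 y5 y6 y7 y8 y9) 1) = true.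
  by case: Hq => ->.
move/List.existsb_exists => [s [Hs /leqbZ_eq Es]]; by exists s.
Qed.
End ZC.
Lemma S0Z_eq : S0Zl = map (map Z_of_int) S0.
Proof. by vm_compute. Qed.
Lemma qL_mk8 y1 y2 y4 y5 y6 y7 y8 y9 : qL (mk8 y1 y2 y4 y5 y6 y7 y8 y9) = qexp y1 y2 y4 y5 y6 y7 y8 y9.
Proof. rewrite /qL /formL /mulL /mk8 /Elist /qexp /= /dotL /=. ring. Qed.

Lemma Zqexp y1 y2 y4 y5 y6 y7 y8 y9 : Z_of_int (qexp y1 y2 y4 y5 y6 y7 y8 y9) =
  ZB.qexpZ (Z_of_int y1) (Z_of_int y2) (Z_of_int y4) (Z_of_int y5) (Z_of_int y6) (Z_of_int y7) (Z_of_int y8) (Z_of_int y9).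
Proof. rewrite /qexp /ZB.qexpZ. nia. Qed.

Lemma inL_mem (T : eqType) (x : T) (s : seq T) : List.In x s -> x \in s.
Proof. elim: s => //= y s IH [->|/IH H]; rewrite inE ?eqxx ?H ?orbT //. Qed.
Lemma S0Z_eqL : S0Zl = List.map (List.map Z_of_int) S0.
Proof. by vm_compute. Qed.

Lemma List_map_eq (A B : Type) (f : A -> B) s : List.map f s = map f s.
Proof. by elim: s => //= x s ->. Qed.

Lemma complete (m : seq int) : size m = 10%N -> nth 0 m 0 = 0 -> nth 0 m 3 = 0 ->
  (qL m == 0) || (qL m == 1) -> m \in S0.
Proof.
case: m => [|x0 [|x1 [|x2 [|x3 [|x4 [|x5 [|x6 [|x7 [|x8 [|x9 [|? ?]]]]]]]]]]] //= _ E0 E3.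
rewrite E0 E3 => Hq.
have -> : [:: 0; x1; x2; 0; x4; x5; x6; x7; x8; x9] = mk8 x1 x2 x4 x5 x6 x7 x8 x9 by [].
move: Hq; rewrite qL_mk8 => Hq.
have HZ : (ZB.qexpZ (Z_of_int x1) (Z_of_int x2) (Z_of_int x4) (Z_of_int x5) (Z_of_int x6) (Z_of_int x7) (Z_of_int x8) (Z_of_int x9) = Z0 \/
     ZB.qexpZ (Z_of_int x1) (Z_of_int x2) (Z_of_int x4) (Z_of_int x5) (Z_of_int x6) (Z_of_int x7) (Z_of_int x8) (Z_of_int x9) = Zpos xH).
  by rewrite -Zqexp; case/orP: Hq => /eqP ->; [left|right].
have [s Hs Es] := ZC.box_mem _ _ _ _ _ _ _ _ HZ.
rewrite S0Z_eqL in Hs; have [s' [Es' Hs']] := proj1 (List.in_map_iff _ _ _) Hs.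
have : map Z_of_int s' = map Z_of_int (mk8 x1 x2 x4 x5 x6 x7 x8 x9).
  rewrite -!List_map_eq Es' Es //.
move/(inj_map (can_inj Z_of_intK)) => <-.
exact: inL_mem Hs'.
Qed.
Definition mat_of (s : seq (seq int)) : 'M[int]_10 := \matrix_(i < 10, j < 10) nth 0 (nth [::] s i) j.
Definition coords (d : vec) : seq int := mkseq (fun k => d (inord k) 0) 10.

Lemma sum10 (f : nat -> int) : \sum_(k < 10) f k = foldr (fun k acc => f k + acc) 0 (iota 0 10).
Proof. by rewrite !big_ord_recl big_ord0. Qed.

Lemma fin10 (P : nat -> nat -> bool) : all (fun i => all (P i) (iota 0 10)) (iota 0 10) ->
  forall i j : 'I_10, P i j.
Proof.
move=> /allP H i j.
have Hi : nat_of_ord i \in iota 0 10 by rewrite mem_iota ltn_ord.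
have Hj : nat_of_ord j \in iota 0 10 by rewrite mem_iota ltn_ord.
by move/allP: (H _ Hi); apply.
Qed.

Lemma vec_ofE s (i : 'I_10) : vec_of s i 0 = nth 0 s i.
Proof. by rewrite mxE. Qed.

Lemma vec_ofK d : vec_of (coords d) = d.
Proof.
apply/matrixP => i j; rewrite mxE (ord1 j) nth_mkseq ?ltn_ord //.
by rewrite inord_val.
Qed.

Lemma size_coords d : size (coords d) = 10%N.
Proof. by rewrite size_mkseq. Qed.

Lemma vec_of_inj s t : size s = 10%N -> size t = 10%N -> vec_of s = vec_of t -> s = t.
Proof.
move=> Hs Ht E; apply: (@eq_from_nth _ 0); first by rewrite Hs Ht.
move=> k; rewrite Hs => Hk.
have := congr1 (fun M : vec => M (Ordinal Hk) 0) E.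
by rewrite !mxE.
Qed.

Lemma mulmx_vec S t : size S = 10%N -> mat_of S *m vec_of t = vec_of (mulL S t).
Proof.
move=> HS; apply/matrixP => i j; rewrite !mxE.
rewrite (eq_bigr (fun k : 'I_10 => nth 0 (nth [::] S i) k * nth 0 t k)); last by move=> k _; rewrite !mxE.
rewrite (sum10 (fun k => nth 0 (nth [::] S i) k * nth 0 t k)) (nth_map [::]) ?HS ?ltn_ord //.
Qed.

Lemma mat_mul A B C :
  all (fun i => all (fun j => foldr (fun k acc => nth 0 (nth [::] A i) k * nth 0 (nth [::] B k) j + acc) 0 (iota 0 10)
     == nth 0 (nth [::] C i) j) (iota 0 10)) (iota 0 10) ->
  mat_of A *m mat_of B = mat_of C.
Proof.
move=> H; apply/matrixP => i j; rewrite !mxE.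
rewrite (eq_bigr (fun k : 'I_10 => nth 0 (nth [::] A i) k * nth 0 (nth [::] B k) j)); last by move=> k _; rewrite !mxE.
rewrite (sum10 (fun k => nth 0 (nth [::] A i) k * nth 0 (nth [::] B k) j)); apply/eqP; exact: (@fin10 (fun i j => foldr (fun k acc => nth 0 (nth [::] A i) k * nth 0 (nth [::] B k) j + acc) 0 (iota 0 10)
     == nth 0 (nth [::] C i) j) H i j).
Qed.

Lemma Emx_eq : Emx = mat_of Elist.
Proof.
apply/matrixP => i j; rewrite !mxE; apply/eqP.
have := @fin10 (fun i j => Eentry i j == nth 0 (nth [::] Elist i) j); apply.
by vm_compute.
Qed.

Lemma EmxT_eq : Emx^T = mat_of ETlist.
Proof.
apply/matrixP => i j; rewrite !mxE; apply/eqP.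
have := @fin10 (fun i j => Eentry j i == nth 0 (nth [::] ETlist i) j); apply.
by vm_compute.
Qed.

Lemma Id_eq : mat_of Idlist = 1%:M.
Proof.
apply/matrixP => i j; rewrite !mxE; apply/eqP.
have := @fin10 (fun i j => nth 0 (nth [::] Idlist i) j == (i == j)%:R); apply.
by vm_compute.
Qed.

Lemma EF_eq : mat_of Elist *m mat_of Flist = 1%:M.
Proof. rewrite -Id_eq; apply: mat_mul; by vm_compute. Qed.

Lemma FET_eq : mat_of Flist *m mat_of ETlist = mat_of NPlist.
Proof. apply: mat_mul; by vm_compute. Qed.

Lemma Phi_eq : Phi = mat_of Plist.
Proof.
pose ir := (fun z : int => z%:~R : rat).
have EQ : EmxQ = map_mx ir (mat_of Elist) by rewrite /EmxQ Emx_eq.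
have FQ : EmxQ *m map_mx ir (mat_of Flist) = 1%:M.
  by rewrite EQ -map_mxM EF_eq map_mx1.
have U : EmxQ \in unitmx by case/mulmx1_unit: FQ.
have Inv : invmx EmxQ = map_mx ir (mat_of Flist).
  by rewrite -[LHS]mulmx1 -FQ mulmxA mulVmx // mul1mx.
have : PhiQ = - map_mx ir (mat_of NPlist).
  by rewrite /PhiQ Inv /EmxQ map_trmx -map_mxM EmxT_eq FET_eq.
move=> HP; apply/matrixP => i j; rewrite /Phi mxE HP !mxE /ir -rmorphN numq_int.
apply/eqP; have := @fin10 (fun i j => - nth 0 (nth [::] NPlist i) j == nth 0 (nth [::] Plist i) j); apply.
by vm_compute.
Qed.
Lemma form_vec s t : Defs.form (vec_of s) (vec_of t) = formL s t.
Proof.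
rewrite /Defs.form Emx_eq -mulmxA mulmx_vec // mxE.
rewrite (eq_bigr (fun k : 'I_10 => nth 0 s k * nth 0 (mulL Elist t) k)); last by move=> k _; rewrite !mxE.
by rewrite (sum10 (fun k => nth 0 s k * nth 0 (mulL Elist t) k)).
Qed.

Lemma Phi_vec t : Phi *m vec_of t = vec_of (PL t).
Proof. by rewrite Phi_eq mulmx_vec. Qed.

Lemma PhiPowS j d : PhiPow j.+1 d = Phi *m PhiPow j d.
Proof. by rewrite /PhiPow exprS -mulmxE mulmxA. Qed.

Lemma PhiPow0 d : PhiPow 0 d = d.
Proof. by rewrite /PhiPow expr0 mul1mx. Qed.

Lemma PhiPowD m n d : PhiPow (m + n) d = PhiPow m (PhiPow n d).
Proof. by rewrite /PhiPow exprD -mulmxE mulmxA. Qed.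

Lemma PhiPow_vec j t : PhiPow j (vec_of t) = vec_of (iter j PL t).
Proof. elim: j => [|j IH]; first by rewrite PhiPow0. by rewrite PhiPowS IH Phi_vec. Qed.

Lemma h_zeroE : h_zero = vec_of h0l. Proof. by []. Qed.
Lemma h_inftyE : h_infty = vec_of hil. Proof. by []. Qed.

Lemma nth_DL m a b k : (k < 10)%N -> nth 0 (DL m a b) k = nth 0 m k + a * nth 0 h0l k + b * nth 0 hil k.
Proof. by move=> Hk; rewrite (nth_map 0%N) ?size_iota // nth_iota. Qed.

Lemma size_DL m a b : size (DL m a b) = 10%N.
Proof. by rewrite size_map size_iota. Qed.

Lemma vec_DL m a b : vec_of (DL m a b) = vec_of m + a *: h_zero + b *: h_infty.
Proof.
apply/matrixP => i j; rewrite h_zeroE h_inftyE !mxE nth_DL //.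
Qed.

Lemma vec_zeros : vec_of zeros = 0.
Proof. by apply/matrixP => i j; rewrite !mxE nth_nseq if_same. Qed.

Lemma hab_eq (a : nat) (b : int) : hab a b = vec_of (DL zeros a%:Z b).
Proof. by rewrite vec_DL vec_zeros add0r. Qed.

Lemma size_PL t : size (PL t) = 10%N.
Proof. by rewrite size_map. Qed.

Lemma size_iterPL j t : size t = 10%N -> size (iter j PL t) = 10%N.
Proof. by case: j => [|j] //= _; rewrite size_PL. Qed.

Lemma cons_eq (T : Type) (x y : T) s t : x = y -> s = t -> x :: s = y :: t.
Proof. by move=> -> ->. Qed.

Ltac listeq := repeat (apply: cons_eq; last first); try ring; try done.

Lemma PL_DL m a b : PL (DL m a b) = DL (PL m) a b.
Proof. rewrite /PL /mulL /DL /= /dotL /=. listeq. Qed.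

Lemma qL_DL m a b : qL (DL m a b) = qL m.
Proof. rewrite /qL /formL /mulL /DL /= /dotL /=. ring. Qed.

Lemma formL_DL_hi m a b : formL (DL m a b) hil = formL m hil + 6 * a.
Proof. rewrite /formL /mulL /DL /= /dotL /=. ring. Qed.

Lemma formL_h0_DL m a b : formL h0l (DL m a b) = formL h0l m + 6 * b.
Proof. rewrite /formL /mulL /DL /= /dotL /=. ring. Qed.

Lemma DL_DL m a b a' b' : DL (DL m a b) a' b' = DL m (a + a') (b + b').
Proof. rewrite /DL /=. listeq. Qed.

Lemma addL_DL s t a b a' b' : addL (DL s a b) (DL t a' b') = DL (addL s t) (a + a') (b + b').
Proof. rewrite /DL /addL /=. listeq. Qed.

Lemma zeros_DL : DL zeros 0 0 = zeros.
Proof. rewrite /DL /=. listeq. Qed.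

Lemma nfL_DL m a b : size m = 10%N -> nth 0 m 0 = 0 -> nth 0 m 3 = 0 -> nfL (DL m a b) = m.
Proof.
case: m => [|x0 [|x1 [|x2 [|x3 [|x4 [|x5 [|x6 [|x7 [|x8 [|x9 [|? ?]]]]]]]]]]] //= _ E0 E3.
rewrite /nfL /DL /= E0 E3. listeq.
Qed.

Lemma DL0 m a b : nth 0 (DL m a b) 0 = nth 0 m 0 + a.
Proof. rewrite /DL /=. ring. Qed.
Lemma DL3 m a b : nth 0 (DL m a b) 3 = nth 0 m 3 + b.
Proof. rewrite /DL /=. ring. Qed.

Lemma DL_nfL x : size x = 10%N -> DL (nfL x) (nth 0 x 0) (nth 0 x 3) = x.
Proof.
case: x => [|x0 [|x1 [|x2 [|x3 [|x4 [|x5 [|x6 [|x7 [|x8 [|x9 [|? ?]]]]]]]]]]] //= _.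
rewrite /nfL /DL /=. listeq.
Qed.

Lemma nfL0 x : nth 0 (nfL x) 0 = 0.
Proof. rewrite /nfL /=. ring. Qed.
Lemma nfL3 x : nth 0 (nfL x) 3 = 0.
Proof. rewrite /nfL /=. ring. Qed.
Lemma size_nfL x : size (nfL x) = 10%N.
Proof. by rewrite size_map size_iota. Qed.

Lemma iter_DL j m a b : iter j PL (DL m a b) = DL (iter j PL m) a b.
Proof. elim: j => [|j IH] //=; by rewrite IH PL_DL. Qed.

Lemma foldr_DL (l : seq nat) m a b : foldr addL zeros [seq iter j PL (DL m a b) | j <- l] =
  DL (foldr addL zeros [seq iter j PL m | j <- l]) ((size l)%:Z * a) ((size l)%:Z * b).
Proof.
elim: l => [|j l IH] /=; first by rewrite !mul0r zeros_DL.
by rewrite IH iter_DL addL_DL intS !mulrDl !mul1r.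
Qed.

Lemma sumL_DL p m a b : sumL p (DL m a b) = DL (sumL p m) (p%:Z * a) (p%:Z * b).
Proof. by rewrite /sumL foldr_DL size_iota. Qed.

Lemma DL_inj s t a b : size s = 10%N -> size t = 10%N -> DL s a b = DL t a b -> s = t.
Proof.
move=> Hs Ht E; apply: (@eq_from_nth _ 0); first by rewrite Hs Ht.
move=> k; rewrite Hs => Hk.
have := congr1 (fun u => nth 0 u k) E; rewrite !nth_DL //.
by move/addIr/addIr.
Qed.
Lemma vec_of_addL s t : vec_of (addL s t) = vec_of s + vec_of t.
Proof. apply/matrixP => i j; rewrite !mxE (nth_map 0%N) ?size_iota // nth_iota //. Qed.

Lemma sum_vec (F : nat -> seq int) (l : seq nat) :
  \sum_(j <- l) vec_of (F j) = vec_of (foldr addL zeros (map F l)).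
Proof.
elim: l => [|j l IH]; first by rewrite big_nil vec_zeros.
by rewrite big_cons IH /= vec_of_addL.
Qed.

Lemma hvec_vec x p : hvec (vec_of x) p = vec_of (sumL p x).
Proof.
rewrite /hvec /sumL.
rewrite (eq_bigr (fun j => vec_of (iter j PL x))); last by move=> j _; rewrite PhiPow_vec.
by rewrite sum_vec /index_iota subSS subn0.
Qed.

Lemma dvdz_anti0 (a b : int) : 0 <= a -> 0 <= b -> (a %| b)%Z -> (b %| a)%Z -> a = b.
Proof.
case: a => [a|a] // ; case: b => [b|b] // _ _; rewrite !dvdzE /= => H1 H2.
by congr Posz; apply/eqP; rewrite eqn_dvd H1 H2.
Qed.

Lemma gcdz_ge0 a b : 0 <= gcdz a b.
Proof. by rewrite /gcdz. Qed.

Lemma qlen_gcd X Y : \big[gcdz/0]_(k < 10) (vec_of (DL zeros X Y)) k 0 = gcdz X Y.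
Proof.
rewrite !big_ord_recl big_ord0 !mxE /=.
have L : forall c c', (gcdz X Y %| 0 + X * c + Y * c')%Z.
  move=> c c'; rewrite add0r; apply: rpredD; apply: dvdz_mulr; [exact: dvdz_gcdl|exact: dvdz_gcdr].
apply: dvdz_anti0; rewrite ?gcdz_ge0 //; last by rewrite !dvdz_gcd !L dvdz0.
rewrite dvdz_gcd; apply/andP; split.
  apply: dvdz_trans (dvdz_gcdl _ _) _; by rewrite mulr1 mulr0 add0r addr0 dvdzz.
do 3 (apply: dvdz_trans (dvdz_gcdr _ _) _).
apply: dvdz_trans (dvdz_gcdl _ _) _; by rewrite mulr0 mulr1 !add0r dvdzz.
Qed.
Definition A0 (lam : option rat) (l : nat) : int := if lam is Some q then l%:Z * denq q else 0.
Definition B0 (lam : option rat) (l : nat) : int := if lam is Some q then l%:Z * numq q else l%:Z.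
Definition posXY (X Y : int) : bool := (0 < X) || ((X == 0) && (0 < Y)).
Definition slopeXY (X Y : int) : option rat := if X == 0 then None else Some (Y%:~R / X%:~R).

Lemma coprimez_dn q : coprimez (denq q) (numq q).
Proof. by rewrite coprimezE coprime_sym coprime_num_den. Qed.

Lemma gcdz_dn q : gcdz (denq q) (numq q) = 1.
Proof. exact/eqP/coprimez_dn. Qed.

Lemma NT lam l X Y : (0 < l)%N ->
  (posXY X Y /\ slopeXY X Y = lam /\ gcdz X Y = l%:Z) <-> (X = A0 lam l /\ Y = B0 lam l).
Proof.
move=> l0; split.
- case: lam => [q|] [P [S G]]; move: S; rewrite /slopeXY /A0 /B0.
  + have [->|X0] := eqVneq X 0 => // -[Eq].
    have Xp : 0 < X by move: P; rewrite /posXY (negPf X0) andFb orbF.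
    have E1 : Y * denq q = X * numq q.
      apply: (@intr_inj rat); rewrite !rmorphM /=.
      have Xn : (X%:~R : rat) != 0 by rewrite intr_eq0.
      rewrite numqE -Eq; field; exact: Xn.
    have Hd : (denq q %| X)%Z.
      rewrite -(Gauss_dvdzr X (coprimez_dn q)) mulrC -E1; apply: dvdz_mull; exact: dvdzz.
    set t := (X %/ denq q)%Z.
    have EX : X = t * denq q by rewrite divzK.
    have EY : Y = t * numq q.
      apply: (mulIf (denq_neq0 q)); rewrite E1 EX; ring.
    have tp : 0 < t by move: Xp; rewrite EX pmulr_lgt0 // denq_gt0.
    move: G; rewrite EX EY -mulz_gcdr gcdz_dn mulr1 gez0_abs ?ltW // => Et.
    by rewrite Et.
  + have [X0|X0] := eqVneq X 0 => // _.
    move: P G; rewrite /posXY X0 ltxx /= gcd0z => Yp Ey.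
    split=> //; move: Ey; rewrite gez0_abs ?ltW //.
- case: lam => [q|] [-> ->]; rewrite /posXY /slopeXY /A0 /B0.
  + have lp : 0 < l%:Z by rewrite ltz_nat.
    have -> : (l%:Z * denq q == 0) = false by rewrite mulf_eq0 denq_eq0 orbF gt_eqF.
    split; first by rewrite pmulr_rgt0 ?denq_gt0.
    split.
      congr Some; rewrite !rmorphM /= -[RHS]divq_num_den; field.
      by rewrite intr_eq0 denq_neq0 pnatr_eq0 -lt0n l0.
    by rewrite -mulz_gcdr gcdz_dn mulr1.
  + split; first by rewrite eqxx ltxx /=; lia.
    by rewrite eqxx gcd0z.
Qed.
Lemma T2all m : m \in S0 -> let p := perL m in
  [&& size m == 10%N, nth 0 m 0 == 0, nth 0 m 3 == 0, (0 < p)%N, iter p PL m == m,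
      all (fun k => iter k PL m != m) (iota 1 p.-1),
      sumL p m == DL zeros (uL m) (wL m),
      p%:Z * formL m hil == 6 * uL m, p%:Z * formL h0l m == 6 * wL m &
      if m == zeros then qL m == 0 else qL m == 1].
Proof. by move=> Hm; have := allP T2_ok m Hm. Qed.

Lemma T2a m : m \in S0 ->
  [/\ size m = 10%N, nth 0 m 0 = 0, nth 0 m 3 = 0, (0 < perL m)%N & iter (perL m) PL m = m].
Proof.
by move/T2all; case/and5P => /eqP H1 /eqP H2 /eqP H3 H4 /andP [/eqP H5 _].
Qed.

Lemma T2b m : m \in S0 ->
  [/\ (forall k, (0 < k < perL m)%N -> iter k PL m != m),
      sumL (perL m) m = DL zeros (uL m) (wL m),
      (perL m)%:Z * formL m hil = 6 * uL m,
      (perL m)%:Z * formL h0l m = 6 * wL m &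
      (qL m == 0) || (qL m == 1)].
Proof.
move/T2all; case/and5P => _ _ _ H4 /and5P [_ /allP H6 /eqP H7 /eqP H8 /andP [/eqP H9 H10]].
split => //.
- move=> k /andP [k0 kp]; apply: H6; rewrite mem_iota k0 /=.
  by rewrite add1n (ltn_predK H4).
- by move: H10; case: (m == zeros) => /eqP ->; rewrite eqxx ?orbT.
Qed.

Lemma eqPow m a b k : m \in S0 ->
  (PhiPow k (vec_of (DL m a b)) == vec_of (DL m a b)) = (iter k PL m == m).
Proof.
move=> Hm; have [Hs _ _ _ _] := T2a _ Hm.
rewrite PhiPow_vec iter_DL; apply/eqP/eqP => [E|->] //.
apply: (@DL_inj _ _ a b); rewrite ?size_iterPL //.
by apply: vec_of_inj; rewrite ?size_DL.
Qed.

Lemma isRank_DL m a b i : m \in S0 -> isRank (vec_of (DL m a b)) i = (i == perL m).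
Proof.
move=> Hm; have [Hs _ _ H4 H5] := T2a _ Hm; have [H6 _ _ _ _] := T2b _ Hm.
rewrite /isRank eqPow //.
have -> : [forall k : 'I_i, (0 < k)%N ==> (PhiPow k (vec_of (DL m a b)) != vec_of (DL m a b))]
        = [forall k : 'I_i, (0 < k)%N ==> (iter k PL m != m)].
  by apply: eq_forallb => k; rewrite eqPow.
apply/idP/eqP => [/and3P [i0 /eqP Hi /forallP Hf]|->].
  have [ilt|ige] := ltnP i (perL m).
    by move: (H6 i); rewrite i0 ilt Hi eqxx => /(_ isT).
  move: ige; rewrite leq_eqVlt => /orP [/eqP -> //|plt].
  by move: (Hf (Ordinal plt)); rewrite /= H4 H5 eqxx.
rewrite H4 H5 eqxx /=; apply/forallP => k; apply/implyP => k0.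
by apply: H6; rewrite k0 ltn_ord.
Qed.

Lemma PS (A B X Y : int) (i : nat) : (0 < i)%N -> i%:Z * A = 6 * X -> i%:Z * B = 6 * Y ->
  ((0 < A) || ((A == 0) && (0 < B))) = posXY X Y /\
  (if A == 0 then None else Some ((B%:~R : rat) / A%:~R)) = slopeXY X Y.
Proof.
move=> i0 HA HB; split.
  rewrite /posXY; apply/idP/idP; case/orP => [H|/andP [/eqP H1 H2]]; apply/orP.
  - left; nia.
  - right; apply/andP; split; [apply/eqP; nia|nia].
  - left; nia.
  - right; apply/andP; split; [apply/eqP; nia|nia].
rewrite /slopeXY; have [A0|A0] := eqVneq A 0.
  by have -> : X == 0 by apply/eqP; nia.
have X0 : X != 0 by apply/eqP => X0; apply/eqP: A0; nia.
rewrite (negPf X0); congr Some; apply/eqP; rewrite eqr_div ?intr_eq0 //.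
apply/eqP; rewrite -!rmorphM; congr intr; nia.
Qed.
Lemma form0l e : Defs.form 0 e = 0.
Proof. by rewrite /Defs.form trmx0 !mul0mx mxE. Qed.
Lemma form0r e : Defs.form e 0 = 0.
Proof. by rewrite /Defs.form mulmx0 mxE. Qed.

Lemma CH lam l i m a b : (0 < l)%N -> m \in S0 ->
  inR lam l i (vec_of (DL m a b)) <->
  [/\ perL m = i, uL m + i%:Z * a = A0 lam l & wL m + i%:Z * b = B0 lam l].
Proof.
move=> l0 Hm.
have [Hs H0 H3 Hp Hper] := T2a _ Hm; have [Hlt Hsum HA HB Hq] := T2b _ Hm.
set d := vec_of (DL m a b).
have FA : Defs.form d h_infty = formL m hil + 6 * a by rewrite h_inftyE form_vec formL_DL_hi.
have FB : Defs.form h_zero d = formL h0l m + 6 * b by rewrite h_zeroE form_vec formL_h0_DL.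
have Fq : qform d = qL m by rewrite /qform form_vec -/(qL _) qL_DL.
have EA : (perL m)%:Z * (formL m hil + 6 * a) = 6 * (uL m + (perL m)%:Z * a).
  by rewrite mulrDr HA; ring.
have EB : (perL m)%:Z * (formL h0l m + 6 * b) = 6 * (wL m + (perL m)%:Z * b).
  by rewrite mulrDr HB; ring.
have [P1 P2] := PS _ _ _ _ _ Hp EA EB.
have Hh : hvec d (perL m) = vec_of (DL zeros (uL m + (perL m)%:Z * a) (wL m + (perL m)%:Z * b)).
  by rewrite hvec_vec sumL_DL Hsum DL_DL.
rewrite /inR /isPosRoot /isRoot /slope isRank_DL // FA FB Fq.
split.
- case=> /andP [/andP [dn0 _] Ppos] [Sl [/eqP Ei Ql]].
  subst i.
  rewrite /qlen Hh qlen_gcd in Ql.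
  rewrite P1 in Ppos; rewrite P2 in Sl.
  by have [-> ->] := (NT lam l _ _ l0).1 (conj Ppos (conj Sl Ql)).
- case=> Ei EX EY; subst i.
  have [Pp [Sl G]] := (NT lam l _ _ l0).2 (conj EX EY).
  have dn0 : d != 0.
    apply/eqP => d0; move: Pp; rewrite -P1 -FA -FB d0 form0l form0r ltxx eqxx /=.
    by [].
  rewrite dn0 Hq P1 Pp P2 Sl eqxx; split => //; split => //; split => //.
  by rewrite /qlen Hh qlen_gcd.
Qed.
Lemma T3m m : m \in S0 -> perL m = 1%N -> m = zeros.
Proof. by move=> Hm H1; have := allP T3_ok m Hm; rewrite H1 eqxx => /eqP. Qed.

Lemma T2q m : m \in S0 -> m != zeros -> qL m = 1.
Proof.
move=> Hm Hz; have := T2all _ Hm; rewrite (negPf Hz).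
by case/and5P => _ _ _ _ /and5P [_ _ _ _ /andP [_ /eqP]].
Qed.

Lemma dec d : d = vec_of (DL (nfL (coords d)) (nth 0 (coords d) 0) (nth 0 (coords d) 3)).
Proof. by rewrite DL_nfL ?size_coords // vec_ofK. Qed.

Lemma inR_S0 lam l i d : inR lam l i d -> nfL (coords d) \in S0.
Proof.
case=> /andP [/andP [_ Hq] _] _.
apply: complete; rewrite ?size_nfL ?nfL0 ?nfL3 //.
by move: Hq; rewrite [in qform d](dec d) /qform form_vec -/(qL _) qL_DL.
Qed.

Lemma inR_ex lam l i d : inR lam l i d -> exists m a b, m \in S0 /\ d = vec_of (DL m a b).
Proof. move=> H; exists (nfL (coords d)), (nth 0 (coords d) 0), (nth 0 (coords d) 3); split; [exact: inR_S0 _ _ _ _ H|exact: dec]. Qed.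

Lemma P1char lam l d : (0 < l)%N -> inR lam l 1 d <-> d = vec_of (DL zeros (A0 lam l) (B0 lam l)).
Proof.
move=> l0; have [Z1 Z2 Z3 Z4] := zeros_data; split.
  move=> H; have [m [a [b [Hm Ed]]]] := inR_ex _ _ _ _ H.
  move: H; rewrite Ed CH // => -[P EA EB].
  have Em := T3m _ Hm P; subst m.
  by rewrite -EA -EB Z3 Z4 !add0r !mul1r.
move=> ->; rewrite CH // Z2 Z3 Z4 !add0r !mul1r //.
Qed.

Lemma Pd lam l (a : nat) (b : int) : (0 < l)%N ->
  match lam with
  | Some q => (0 < a)%N /\ b%:~R / a%:R = q
  | None => a = 0%N /\ b = l%:Z
  end -> gcdz a%:Z b = l%:Z -> forall d, inR lam l 1 d <-> d = hab a b.
Proof.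
move=> l0 H G d.
have [Ea Eb] : a%:Z = A0 lam l /\ b = B0 lam l.
  apply: (NT lam l a b l0).1; split; last split => //.
  - case: lam H => [q [a0 _]|[-> ->]]; rewrite /posXY.
      by rewrite ltz_nat a0.
    by apply/orP; right; apply/andP; split => //; rewrite ltz_nat.
  - case: lam H => [q [a0 E]|[-> ->]]; rewrite /slopeXY.
      have -> : (a%:Z == 0) = false by apply/negbTE; rewrite eqz_nat -lt0n.
      by rewrite -pmulrn E.
    by rewrite eqxx.
by rewrite P1char // hab_eq Ea Eb.
Qed.

Lemma inv1 lam l i d : (0 < l)%N -> inR lam l i d -> inR lam l i (Phi *m d).
Proof.
move=> l0 H; have [m [a [b [Hm Ed]]]] := inR_ex _ _ _ _ H.
move: H; rewrite Ed CH // => -[P EA EB].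
have := allP T6_ok m Hm => /= /and4P [Hm' /eqP Ep /eqP Eu /eqP Ew].
rewrite Phi_vec PL_DL -[PL m](DL_nfL _ (size_PL m)) DL_DL CH //; split.
- by rewrite Ep.
- by rewrite -EA -Eu P; ring.
- by rewrite -EB -Ew P; ring.
Qed.

Lemma invPow lam l i d j : (0 < l)%N -> inR lam l i d -> inR lam l i (PhiPow j d).
Proof.
move=> l0 H; elim: j => [|j IH]; first by rewrite PhiPow0.
by rewrite PhiPowS; apply: inv1.
Qed.

Lemma Pb lam l i : i \in [:: 2; 3; 6]%N -> (0 < l)%N -> (i %| l)%N -> forall d, ~ inR lam l i d.
Proof.
move=> Hi l0 il d H.
have [m [a [b [Hm Ed]]]] := inR_ex _ _ _ _ H.
move: H; rewrite Ed CH // => -[P EA EB].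
have i1 : (1 < i)%N by move: Hi; rewrite !inE => /or3P [] /eqP ->.
have := allP T4_ok m Hm; rewrite P i1 /= => /negP; apply.
have il' : (i%:Z %| l%:Z)%Z by rewrite dvdzE.
have HAB : forall lam', (i%:Z %| A0 lam' l)%Z /\ (i%:Z %| B0 lam' l)%Z.
  case=> [q|] /=; split; by [apply: dvdz_mulr | exact: dvdz0 | ].
have [HA HB] := HAB lam.
apply/andP; split.
  rewrite (_ : uL m = A0 lam l - i%:Z * a); last by rewrite -EA; ring.
  by apply: rpredB => //; apply: dvdz_mulr; exact: dvdzz.
rewrite (_ : wL m = B0 lam l - i%:Z * b); last by rewrite -EB; ring.
by apply: rpredB => //; apply: dvdz_mulr; exact: dvdzz.
Qed.

Lemma cls_okE i p r m : cls_ok i p r (fcl m) =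
  (perL m == i) && ((uL m %% i%:Z)%Z == p%:Z) && ((wL m %% i%:Z)%Z == r%:Z).
Proof. by []. Qed.

Lemma T5m i p r : i \in [:: 2; 3; 6]%N -> (p < i)%N -> (r < i)%N -> (p != 0)%N || (r != 0)%N ->
  size (mlist i p r) = i.
Proof.
move=> Hi Hp Hr Hnz.
have -> : size (mlist i p r) = count (cls_ok i p r) (map fcl S0) by rewrite size_filter count_map.
move: T5_ok; rewrite /T5 => /allP /(_ i Hi) /allP /(_ p).
rewrite mem_iota add0n Hp => /(_ isT) /allP /(_ r).
by rewrite mem_iota add0n Hr => /(_ isT) /implyP /(_ Hnz) /eqP.
Qed.

Lemma Pc lam l i : i \in [:: 2; 3; 6]%N -> (0 < l)%N -> ~~ (i %| l)%N ->
  exists s : seq vec,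
    [/\ size s = i, uniq s, all isReal s & forall d, inR lam l i d <-> d \in s].
Proof.
move=> Hi l0 nil.
have i1 : (1 < i)%N by move: Hi; rewrite !inE => /or3P [] /eqP ->.
have i0 : (0 < i)%N by apply: ltnW.
have iz : i%:Z != 0 by rewrite eqz_nat -lt0n.
have ip : 0 < i%:Z by rewrite ltz_nat.
set A := A0 lam l; set B := B0 lam l.
have [_ [_ G]] := (NT lam l A B l0).2 (conj erefl erefl).
pose pn := `|(A %% i%:Z)%Z|%N; pose rn := `|(B %% i%:Z)%Z|%N.
have Ep : pn%:Z = (A %% i%:Z)%Z by rewrite /pn gez0_abs // modz_ge0.
have Er : rn%:Z = (B %% i%:Z)%Z by rewrite /rn gez0_abs // modz_ge0.
have Hpn : (pn < i)%N by rewrite -ltz_nat Ep ltz_pmod.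
have Hrn : (rn < i)%N by rewrite -ltz_nat Er ltz_pmod.
have Hnz : (pn != 0)%N || (rn != 0)%N.
  rewrite -negb_and; apply/negP => /andP [/eqP p0 /eqP r0].
  have dA : (i%:Z %| A)%Z by apply/dvdz_mod0P; rewrite -Ep p0.
  have dB : (i%:Z %| B)%Z by apply/dvdz_mod0P; rewrite -Er r0.
  have : (i%:Z %| gcdz A B)%Z by rewrite dvdz_gcd dA dB.
  by rewrite G dvdzE /= (negPf nil).
pose ml := mlist i pn rn.
have memml m : m \in ml = [&& m \in S0, perL m == i, (uL m %% i%:Z)%Z == (A %% i%:Z)%Z & (wL m %% i%:Z)%Z == (B %% i%:Z)%Z].
  by rewrite /ml /mlist mem_filter cls_okE -Ep -Er andbC !andbA.
pose f m := vec_of (DL m ((A - uL m) %/ i%:Z)%Z ((B - wL m) %/ i%:Z)%Z).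
exists (map f ml); split.
- by rewrite size_map /ml T5m.
- rewrite map_inj_in_uniq ?filter_uniq ?S0_uniq // => m1 m2.
  rewrite !memml => /and4P [H1 _ _ _] /and4P [H2 _ _ _] /vec_of_inj E.
  have [Hs1 H01 H31 _ _] := T2a _ H1; have [Hs2 H02 H32 _ _] := T2a _ H2.
  rewrite -(nfL_DL _ ((A - uL m1) %/ i%:Z)%Z ((B - wL m1) %/ i%:Z)%Z Hs1 H01 H31).
  by rewrite E ?size_DL // nfL_DL.
- apply/allP => d /mapP [m]; rewrite memml => /and4P [Hm /eqP P _ _] ->.
  have mz : m != zeros.
    apply/eqP => mz; have [_ Z2 _ _] := zeros_data.
    by move: i1; rewrite -P mz Z2.
  have Hq : qform (f m) = 1 by rewrite /f /qform form_vec -/(qL _) qL_DL T2q.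
  rewrite /isReal /isRoot Hq eqxx orbT andbT andbT.
  by apply/eqP => E; move: Hq; rewrite E /qform form0l.
- move=> d; split.
    move=> H; have [m [a [b [Hm Ed]]]] := inR_ex _ _ _ _ H.
    move: H; rewrite Ed CH // => -[P EA EB]; apply/mapP; exists m.
      rewrite memml Hm P eqxx /=.
      rewrite (_ : uL m = (- a) * i%:Z + A); last by rewrite /A -EA; ring.
      rewrite (_ : wL m = (- b) * i%:Z + B); last by rewrite /B -EB; ring.
      by rewrite !modzMDl !eqxx.
    rewrite /f (_ : A - uL m = a * i%:Z); last by rewrite /A -EA; ring.
    by rewrite (_ : B - wL m = b * i%:Z) ?mulzK // /B -EB; ring.
  case/mapP => m; rewrite memml => /and4P [Hm /eqP P /eqP Eu /eqP Ew] ->.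
  rewrite /f CH //; split => //.
    have Hd : (i%:Z %| A - uL m)%Z by rewrite -eqz_mod_dvd Eu.
    by rewrite mulrC divzK //; ring.
  have Hd : (i%:Z %| B - wL m)%Z by rewrite -eqz_mod_dvd Ew.
  by rewrite mulrC divzK //; ring.
Qed.

Lemma Pa lam l i d : i \in [:: 1; 2; 3; 6]%N -> (0 < l)%N -> inR lam l i d ->
  forall e, inR lam l i e <-> exists2 j : nat, (1 <= j <= i)%N & e = PhiPow j d.
Proof.
move=> Hi l0 Hd e; split; last by case=> j _ ->; apply: invPow.
have [_ [_ [Rk _]]] := Hd.
move/and3P: Rk => [i0 /eqP Pi /forallP Pf].
have [i1|i1] := eqVneq i 1%N.
  subst i; move=> He; exists 1%N => //.
  by rewrite Pi; move: He Hd; rewrite !P1char // => -> ->.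
have Hi' : i \in [:: 2; 3; 6]%N by move: Hi i1; rewrite !inE => /or4P [] /eqP ->.
have [il|nil] := boolP (i %| l)%N; first by case: (Pb _ _ _ Hi' l0 il _ Hd).
have [s [Ss Us As Hs]] := Pc lam l i Hi' l0 nil.
pose t := [seq PhiPow j d | j <- iota 1 i].
have Ht : {subset t <= s} by move=> x /mapP [j _ ->]; rewrite -Hs; apply: invPow.
have key : forall j k, (1 <= j)%N -> (j < k)%N -> (k <= i)%N -> PhiPow j d = PhiPow k d -> False.
  move=> j k j1 jk ki E.
  have nlt : (i - k + j < i)%N by lia.
  have := Pf (Ordinal nlt); rewrite /= addn_gt0 j1 orbT /=.
  rewrite PhiPowD E -PhiPowD subnK // Pi eqxx //.
have Ut : uniq t.
  rewrite map_inj_in_uniq ?iota_uniq // => j k; rewrite !mem_iota !add1n !ltnS => /andP [j1 ji] /andP [k1 ki] E.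
  case: (ltngtP j k) => // [jk|kj]; first by case: (key j k j1 jk ki E).
  by case: (key k j k1 kj ji (esym E)).
have Hsz : (size s <= size t)%N by rewrite Ss size_map size_iota.
have [_ Eq] := uniq_min_size Ut Ht Hsz.
move=> He; have : e \in t by rewrite Eq -Hs.
case/mapP => j; rewrite mem_iota add1n ltnS => Hj ->.
by exists j.
Qed.

Theorem mainTheorem15 (lam : option rat) (i l : nat) :
  i \in [:: 1; 2; 3; 6]%N -> (0 < l)%N ->
  (* (a) *)
  (forall d, inR lam l i d ->
     forall e, inR lam l i e <-> exists2 j : nat, (1 <= j <= i)%N & e = PhiPow j d) /\
  (* (b) *)
  ((1 < i)%N -> (i %| l)%N -> forall d, ~ inR lam l i d) /\
  (* (c) *)
  ((1 < i)%N -> ~~ (i %| l)%N ->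
     exists s : seq vec,
       [/\ size s = i, uniq s, all isReal s & forall d, inR lam l i d <-> d \in s]) /\
  (* (d) *)
  (forall (a : nat) (b : int),
     match lam with
     | Some q => (0 < a)%N /\ b%:~R / a%:R = q
     | None => a = 0%N /\ b = l%:Z
     end ->
     gcdz a%:Z b = l%:Z ->
     forall d, inR lam l 1 d <-> d = hab a b).
Proof.
move=> Hi l0.
have Hi' : (1 < i)%N -> i \in [:: 2; 3; 6]%N.
  by move=> i1; move: Hi i1; rewrite !inE => /or4P [] /eqP ->.
split; first by move=> d Hd e; exact: Pa _ _ _ _ Hi l0 Hd e.
split; first by move=> i1 il d; exact: Pb _ _ _ (Hi' i1) l0 il d.
split; first by move=> i1 nil; exact: Pc _ _ _ (Hi' i1) l0 nil.
by move=> a b H G d; exact: Pd _ _ _ _ l0 H G d.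
Qed.
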